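(* Let $S$ be a scoring function with $\|S\|_\delta>0$. Then for all $n$ large enough, $$P\left(\frac{L_n(S)}{n}\geq\lambda(S)-\frac{\ln(n)}{\sqrt n}\right)\geq 1-n^{-\alpha_1\ln(n)},\qquad \alpha_1=\frac{1}{8\|S\|_\delta^2}.$$
   Context: Let $\mathcal{A}$ be a finite alphabet and $\mathcal{A}^*=\mathcal{A}\cup\{G\}$, where $G$ is a gap symbol. A scoring function is a symmetric map $S:\mathcal{A}^*\times\mathcal{A}^*\to\mathbb{R}$, and $\|S\|_\delta=\max_{c,d,e\in\mathcal{A}^*}|S(c,d)-S(c,e)|$. For strings $x=x_1\dots x_m$, $y=y_1\dots y_{m'}$ over $\mathcal{A}$, an alignment $\pi$ is a sequence $((\mu_1,\nu_1),\dots,(\mu_k,\nu_k))$, $k\ge0$, with $1\le\mu_1<\dots<\mu_k\le m$ and $1\le\nu_1<\dots<\nu_k\le m'$; its score is $S_\pi(x,y)=\sum_{i=1}^k S(x_{\mu_i},y_{\nu_i})+\sum_{j\notin\{\mu_i\}}S(x_j,G)+\sum_{j\notin\{\nu_i\}}S(G,y_j)$, and $L_S(x,y)=\max_\pi S_\pi(x,y)$. Let $X=X_1\dots X_n$, $Y=Y_1\dots Y_n$ where all $2n$ letters are i.i.d. with values in $\mathcal{A}$. Put $L_n(S)=L_S(X,Y)$, $\lambda_n(S)=E[L_n(S)]/n$, $\lambda(S)=\lim_n\lambda_n(S)$. *)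

(* Defs.v *)
From Stdlib Require Import Reals List.
Import ListNotations.
Open Scope R_scope.

(* Alphabet A = {0,...,k-1} (letters are nats < k).
   Extended alphabet A* = A ∪ {G}: encoded as [option nat], with [None] = gap G. *)
Definition Astar (k : nat) : list (option nat) := None :: map Some (seq 0 k).

(* ||S||_delta = max_{c,d,e in A*} |S(c,d) - S(c,e)|  (all values are >= 0) *)
Definition Sdelta (k : nat) (sc : option nat -> option nat -> R) : R :=
  fold_right Rmax 0
    (flat_map (fun c => flat_map (fun d => map (fun e => Rabs (sc c d - sc c e))
        (Astar k)) (Astar k)) (Astar k)).

Fixpoint sublists {T : Type} (l : list T) : list (list T) :=
  match l with
  | [] => [[]]
  | a :: t => let r := sublists t in map (cons a) r ++ r
  end.

Fixpoint incr (pi : list (nat * nat)) : bool :=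
  match pi with
  | (a, b) :: ((c, d) :: _) as t => (Nat.ltb a c && Nat.ltb b d && incr t)%bool
  | _ => true
  end.

(* all alignments ((mu_1,nu_1),...,(mu_k,nu_k)), 1<=mu_1<...<mu_k<=m,
   1<=nu_1<...<nu_k<=m' (each is a subsequence of the lexicographically
   ordered list of all pairs). *)
Definition alignments (m m' : nat) : list (list (nat * nat)) :=
  filter incr (sublists (list_prod (seq 1 m) (seq 1 m'))).

(* 1-based letter access x_j *)
Definition letter_at (x : list nat) (j : nat) : option nat := Some (nth (j - 1) x 0%nat).

Definition sumR (l : list R) : R := fold_right Rplus 0 l.

Definition align_score (sc : option nat -> option nat -> R) (x y : list nat)
    (pi : list (nat * nat)) : R :=
  sumR (map (fun q => sc (letter_at x (fst q)) (letter_at y (snd q))) pi)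
  + sumR (map (fun j => sc (letter_at x j) None)
       (filter (fun j => negb (existsb (fun q => Nat.eqb (fst q) j) pi)) (seq 1 (length x))))
  + sumR (map (fun j => sc None (letter_at y j))
       (filter (fun j => negb (existsb (fun q => Nat.eqb (snd q) j) pi)) (seq 1 (length y)))).

Definition LS (sc : option nat -> option nat -> R) (x y : list nat) : R :=
  fold_right Rmax (align_score sc x y [])
    (map (align_score sc x y) (alignments (length x) (length y))).

Fixpoint words (k n : nat) : list (list nat) :=
  match n with
  | O => [[]]
  | Datatypes.S n' => flat_map (fun a => map (cons a) (words k n')) (seq 0 k)
  end.

Definition weight (p : nat -> R) (w : list nat) : R := fold_right Rmult 1 (map p w).

(* E[f(X,Y)], X = X_1..X_n, Y = Y_1..Y_n, all 2n letters i.i.d. with law p on {0..k-1} *)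
Definition Expect (k : nat) (p : nat -> R) (n : nat) (f : list nat -> list nat -> R) : R :=
  sumR (flat_map (fun X => map (fun Y => weight p X * weight p Y * f X Y) (words k n))
    (words k n)).

Definition Prob (k : nat) (p : nat -> R) (n : nat) (E : list nat -> list nat -> bool) : R :=
  Expect k p n (fun X Y => if E X Y then 1 else 0).

Definition lambda_n (k : nat) (p : nat -> R) (sc : option nat -> option nat -> R) (n : nat) : R :=
  Expect k p n (LS sc) / INR n.

Definition Rge_b (a b : R) : bool := if Rle_dec b a then true else false.

(* Main.v *)
Require Import Defs.
From Stdlib Require Import Reals List Lra Lia Sorted Bool Arith ZArith.
Import ListNotations.
Open Scope R_scope.

Lemma sumR_app l1 l2 : sumR (l1 ++ l2) = sumR l1 + sumR l2.
Proof. induction l1; simpl; [lra|]. unfold sumR in *; simpl; rewrite IHl1; lra. Qed.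

Lemma sumR_cons a l : sumR (a :: l) = a + sumR l.
Proof. reflexivity. Qed.

Lemma sumR_nil : sumR [] = 0.
Proof. reflexivity. Qed.

Lemma sumR_map_plus {A} (f g : A -> R) l :
  sumR (map (fun x => f x + g x) l) = sumR (map f l) + sumR (map g l).
Proof. induction l; cbn [map]; rewrite ?sumR_cons, ?sumR_nil; [lra|]. rewrite IHl; lra. Qed.

Lemma sumR_map_scal {A} (c : R) (f : A -> R) l :
  sumR (map (fun x => c * f x) l) = c * sumR (map f l).
Proof. induction l; cbn [map]; rewrite ?sumR_cons, ?sumR_nil; [lra|]. rewrite IHl; lra. Qed.

Lemma sumR_map_ext {A} (f g : A -> R) l :
  (forall x, In x l -> f x = g x) -> sumR (map f l) = sumR (map g l).
Proof.
  induction l; intros H; cbn [map]; auto. rewrite !sumR_cons, H, IHl; auto with datatypes.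
Qed.

Lemma sumR_map_le {A} (f g : A -> R) l :
  (forall x, In x l -> f x <= g x) -> sumR (map f l) <= sumR (map g l).
Proof.
  induction l; intros H; cbn [map]; [lra|]. rewrite !sumR_cons.
  assert (f a <= g a) by auto with datatypes. assert (sumR (map f l) <= sumR (map g l)) by auto with datatypes. lra.
Qed.

Lemma sumR_map_nonneg {A} (f : A -> R) l :
  (forall x, In x l -> 0 <= f x) -> 0 <= sumR (map f l).
Proof.
  intros H. replace 0 with (sumR (map (fun _ : A => 0) l)).
  - apply sumR_map_le; auto.
  - induction l; cbn [map]; auto. rewrite sumR_cons, IHl; auto with datatypes; lra.
Qed.

Lemma sumR_map_zero {A} l : sumR (map (fun _ : A => 0) l) = 0.
Proof. induction l; cbn [map]; auto. rewrite sumR_cons, IHl; lra. Qed.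

Lemma sumR_flat_map {A B} (f : B -> R) (h : A -> list B) l :
  sumR (map f (flat_map h l)) = sumR (map (fun a => sumR (map f (h a))) l).
Proof.
  induction l; cbn [map flat_map]; auto. rewrite map_app, sumR_app, IHl, sumR_cons. reflexivity.
Qed.

Lemma sumR_map_sum {A B} (h : A -> B -> R) (l1 : list A) (l2 : list B) :
  sumR (map (fun a => sumR (map (fun b => h a b) l2)) l1) =
  sumR (map (fun b => sumR (map (fun a => h a b) l1)) l2).
Proof.
  induction l1; cbn [map].
  - rewrite sumR_map_zero. reflexivity.
  - rewrite sumR_cons, IHl1. rewrite <- sumR_map_plus. apply sumR_map_ext. intros. rewrite sumR_cons; reflexivity.
Qed.

Definition gw (k : nat) (w : list nat) : Prop := Forall (fun c => (c < k)%nat) w.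

Lemma words_in k N w : In w (words k N) -> length w = N /\ gw k w.
Proof.
  revert w; induction N; intros w H; simpl in H.
  - destruct H as [H|[]]; subst; split; [reflexivity| constructor].
  - apply in_flat_map in H. destruct H as [c [Hc Hw]]. apply in_map_iff in Hw.
    destruct Hw as [w' [<- Hw']]. apply IHN in Hw'. destruct Hw'. apply in_seq in Hc.
    split; simpl; [lia|]. constructor; [lia|auto].
Qed.

Definition Ew (k : nat) (p : nat -> R) (N : nat) (g : list nat -> R) : R :=
  sumR (map (fun w => weight p w * g w) (words k N)).

Lemma Ew_0 k p g : Ew k p 0 g = g [].
Proof. unfold Ew, weight, sumR. simpl. lra. Qed.

Lemma Ew_S k p N g :
  Ew k p (S N) g = sumR (map (fun c => p c * Ew k p N (fun w => g (c :: w))) (seq 0 k)).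
Proof.
  unfold Ew. simpl. rewrite sumR_flat_map. apply sumR_map_ext. intros c _.
  rewrite map_map, <- sumR_map_scal. apply sumR_map_ext. intros w _.
  unfold weight; simpl. lra.
Qed.

Lemma Ew_ext k p N g h :
  (forall w, length w = N -> gw k w -> g w = h w) -> Ew k p N g = Ew k p N h.
Proof.
  intros H. unfold Ew. apply sumR_map_ext. intros w Hw. apply words_in in Hw.
  destruct Hw. rewrite H; auto.
Qed.

Lemma Ew_plus k p N g h : Ew k p N (fun w => g w + h w) = Ew k p N g + Ew k p N h.
Proof.
  unfold Ew. rewrite <- sumR_map_plus. apply sumR_map_ext. intros; lra.
Qed.

Lemma Ew_scal k p N c g : Ew k p N (fun w => c * g w) = c * Ew k p N g.
Proof.
  unfold Ew. rewrite <- sumR_map_scal. apply sumR_map_ext. intros; lra.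
Qed.

Lemma Ew_opp k p N g : Ew k p N (fun w => - g w) = - Ew k p N g.
Proof.
  replace (- Ew k p N g) with ((-1) * Ew k p N g) by lra. rewrite <- Ew_scal.
  apply Ew_ext; intros; lra.
Qed.

Lemma Ew_le k p N g h :
  (forall i, (i < k)%nat -> 0 <= p i) ->
  (forall w, length w = N -> gw k w -> g w <= h w) -> Ew k p N g <= Ew k p N h.
Proof.
  intros Hp. revert g h. induction N; intros g h H.
  - rewrite !Ew_0. apply H; [reflexivity|constructor].
  - rewrite !Ew_S. apply sumR_map_le. intros c Hc. apply in_seq in Hc.
    apply Rmult_le_compat_l; [apply Hp; lia|]. apply IHN. intros w Hl Hw.
    apply H; simpl; [lia|constructor; [lia|auto]].
Qed.

Lemma Ew_const k p N c :
  sumR (map p (seq 0 k)) = 1 -> Ew k p N (fun _ => c) = c.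
Proof.
  intros Hs. induction N.
  - apply Ew_0.
  - rewrite Ew_S. rewrite (sumR_map_ext _ (fun c0 => c * p c0)).
    + rewrite sumR_map_scal, Hs; lra.
    + intros; rewrite IHN; lra.
Qed.

Lemma Ew_sum k p N {A} (h : A -> list nat -> R) l :
  Ew k p N (fun w => sumR (map (fun a => h a w) l)) = sumR (map (fun a => Ew k p N (h a)) l).
Proof.
  unfold Ew. rewrite (sumR_map_ext _ (fun w => sumR (map (fun a => weight p w * h a w) l))).
  - apply sumR_map_sum.
  - intros. rewrite <- sumR_map_scal. reflexivity.
Qed.

Lemma Ew_prod k p a b (g : list nat -> list nat -> R) :
  Ew k p (a + b) (fun w => g (firstn a w) (skipn a w)) =
  Ew k p a (fun x => Ew k p b (fun y => g x y)).
Proof.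
  revert g; induction a; intros g.
  - simpl. rewrite Ew_0. reflexivity.
  - simpl plus. rewrite !Ew_S. apply sumR_map_ext. intros c _. f_equal.
    simpl. apply (IHa (fun x y => g (c :: x) y)).
Qed.

Lemma Ew_fubini k p a b (F : list nat -> list nat -> R) :
  Ew k p a (fun x => Ew k p b (fun y => F x y)) = Ew k p b (fun y => Ew k p a (fun x => F x y)).
Proof.
  revert F; induction a; intros F.
  - rewrite Ew_0. apply Ew_ext. intros. rewrite Ew_0. reflexivity.
  - rewrite Ew_S. rewrite (sumR_map_ext _ (fun c => p c * Ew k p b (fun y => Ew k p a (fun x => F (c::x) y)))).
    2:{ intros c _. rewrite (IHa (fun x y => F (c :: x) y)). reflexivity. }
    rewrite (Ew_ext k p b (fun y => Ew k p (S a) (fun x => F x y))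
        (fun y => sumR (map (fun c => p c * Ew k p a (fun x => F (c :: x) y)) (seq 0 k)))).
    2:{ intros. apply Ew_S. }
    rewrite Ew_sum. apply sumR_map_ext. intros. symmetry. apply Ew_scal.
Qed.

Lemma Ew_firstn k p n m (h : list nat -> R) :
  sumR (map p (seq 0 k)) = 1 ->
  Ew k p (n + m) (fun w => h (firstn n w)) = Ew k p n h.
Proof.
  intros Hs. rewrite (Ew_prod k p n m (fun x y => h x)).
  apply Ew_ext. intros. apply Ew_const; auto.
Qed.

Lemma Ew_skipn k p n m (h : list nat -> R) :
  sumR (map p (seq 0 k)) = 1 ->
  Ew k p (n + m) (fun w => h (skipn n w)) = Ew k p m h.
Proof.
  intros Hs. rewrite (Ew_prod k p n m (fun x y => h y)). apply Ew_const; auto.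
Qed.

Lemma Expect_Ew k p n F : Expect k p n F = Ew k p n (fun X => Ew k p n (fun Y => F X Y)).
Proof.
  unfold Expect, Ew. rewrite <- (map_id (flat_map _ _)).
  rewrite sumR_flat_map. apply sumR_map_ext. intros X _. rewrite map_map.
  rewrite <- sumR_map_scal. apply sumR_map_ext. intros; lra.
Qed.

Lemma Rabs_le_between a b : Rabs a <= b -> - b <= a <= b.
Proof. unfold Rabs; destruct (Rcase_abs a); intros; lra. Qed.

Definition BDw (k : nat) (g : list nat -> R) (D : R) : Prop :=
  forall u v c c', gw k u -> gw k v -> (c < k)%nat -> (c' < k)%nat ->
    Rabs (g (u ++ c :: v) - g (u ++ c' :: v)) <= D.

Lemma BD_cons k g D c : BDw k g D -> (c < k)%nat -> BDw k (fun w => g (c :: w)) D.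
Proof.
  intros H Hc u v a a' Hu Hv Ha Ha'. apply (H (c :: u) v a a'); auto. constructor; auto.
Qed.

Lemma BD_opp k g D : BDw k g D -> BDw k (fun w => - g w) D.
Proof.
  intros H u v a a' Hu Hv Ha Ha'. specialize (H u v a a' Hu Hv Ha Ha').
  rewrite <- Rabs_Ropp. replace (- (- g (u ++ a :: v) - - g (u ++ a' :: v))) with
   (g (u ++ a :: v) - g (u ++ a' :: v)) by ring. auto.
Qed.

Lemma avg_le k p x (h : nat -> R) :
  (forall i, (i < k)%nat -> 0 <= p i) -> sumR (map p (seq 0 k)) = 1 ->
  (forall c, (c < k)%nat -> x <= h c) -> x <= sumR (map (fun c => p c * h c) (seq 0 k)).
Proof.
  intros Hp Hs H. replace x with (sumR (map (fun c => p c * x) (seq 0 k))).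
  - apply sumR_map_le. intros c Hc. apply in_seq in Hc. apply Rmult_le_compat_l; [apply Hp; lia|]. apply H; lia.
  - rewrite (sumR_map_ext _ (fun c => x * p c)) by (intros; ring).
    rewrite sumR_map_scal. change (x * sumR (map p (seq 0 k)) = x). rewrite Hs; ring.
Qed.

Lemma avg_ge k p x (h : nat -> R) :
  (forall i, (i < k)%nat -> 0 <= p i) -> sumR (map p (seq 0 k)) = 1 ->
  (forall c, (c < k)%nat -> h c <= x) -> sumR (map (fun c => p c * h c) (seq 0 k)) <= x.
Proof.
  intros Hp Hs H.
  assert (- x <= sumR (map (fun c => p c * (- h c)) (seq 0 k))).
  { apply avg_le; auto. intros c Hc. specialize (H c Hc). lra. }
  rewrite (sumR_map_ext _ (fun c => (-1) * (p c * h c))) in H0 by (intros; ring).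
  rewrite sumR_map_scal in H0. lra.
Qed.

Lemma Ew_mean_bound k p N g D c :
  (forall i, (i < k)%nat -> 0 <= p i) -> sumR (map p (seq 0 k)) = 1 ->
  BDw k g D -> (c < k)%nat ->
  Ew k p (S N) g - D <= Ew k p N (fun w => g (c :: w)) <= Ew k p (S N) g + D.
Proof.
  intros Hp Hs HB Hc. rewrite Ew_S. split.
  - assert (sumR (map (fun c0 => p c0 * Ew k p N (fun w => g (c0 :: w))) (seq 0 k))
              <= Ew k p N (fun w => g (c :: w)) + D); [|lra].
    apply avg_ge; auto. intros c' Hc'.
    rewrite <- (Ew_const k p N D Hs), <- Ew_plus. apply Ew_le; auto.
    intros w _ Hw. specialize (HB [] w c' c (Forall_nil _) Hw Hc' Hc). simpl in HB.
    apply Rabs_le_between in HB. lra.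
  - assert (Ew k p N (fun w => g (c :: w)) - D <=
            sumR (map (fun c0 => p c0 * Ew k p N (fun w => g (c0 :: w))) (seq 0 k))); [|lra].
    apply avg_le; auto. intros c' Hc'.
    assert (Ew k p N (fun w => g (c :: w)) <= Ew k p N (fun w => g (c' :: w)) + D); [|lra].
    rewrite <- (Ew_const k p N D Hs), <- Ew_plus. apply Ew_le; auto.
    intros w _ Hw. specialize (HB [] w c c' (Forall_nil _) Hw Hc Hc'). simpl in HB.
    apply Rabs_le_between in HB. lra.
Qed.

Lemma Ew_osc k p N g D :
  (forall i, (i < k)%nat -> 0 <= p i) -> sumR (map p (seq 0 k)) = 1 ->
  BDw k g D -> forall w, length w = N -> gw k w -> g w <= Ew k p N g + INR N * D.
Proof.
  intros Hp Hs. revert g. induction N; intros g HB w Hl Hw.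
  - destruct w; [|discriminate]. rewrite Ew_0. simpl; lra.
  - destruct w as [|c w]; [discriminate|]. inversion Hw; subst.
    simpl in Hl. injection Hl as Hl.
    pose proof (IHN (fun w => g (c :: w)) (BD_cons _ _ _ _ HB H1) w Hl H2).
    pose proof (Ew_mean_bound k p N g D c Hp Hs HB H1). rewrite S_INR. simpl in H. lra.
Qed.

Lemma exp_quad x : Rabs x <= 0.2 -> exp x <= 1 + x + 0.9 * (x * x).
Proof.
  intros Hx. apply Rabs_le_between in Hx.
  assert (H1 := exp_ineq1_le (- (x / 2))).
  assert (Hy : 0 < 1 - x / 2) by lra.
  assert (Hexp : exp (x / 2) <= / (1 - x / 2)).
  { assert (exp (x/2) * exp (- (x/2)) = 1) by (rewrite <- exp_plus; replace (x/2 + - (x/2)) with 0 by ring; apply exp_0).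
    assert (0 < exp (x/2)) by apply exp_pos.
    apply (Rmult_le_reg_r (1 - x/2)); auto. rewrite Rinv_l by lra. nra. }
  assert (Hx2 : exp x = exp (x/2) * exp (x/2)) by (rewrite <- exp_plus; f_equal; field).
  rewrite Hx2.
  assert (0 < exp (x/2)) by apply exp_pos.
  apply Rle_trans with (/ (1 - x/2) * / (1 - x/2)).
  { apply Rmult_le_compat; lra. }
  rewrite <- Rinv_mult.
  apply (Rmult_le_reg_r ((1 - x/2) * (1 - x/2))); [nra|]. rewrite Rinv_l by nra.
  nra.
Qed.

Lemma Ew_conc k p N g D s :
  (forall i, (i < k)%nat -> 0 <= p i) -> sumR (map p (seq 0 k)) = 1 ->
  BDw k g D -> 0 <= D -> 0 <= s -> s * D <= 0.2 ->
  Ew k p N (fun w => exp (s * (Ew k p N g - g w))) <= exp (0.9 * INR N * (s * s * (D * D))).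
Proof.
  intros Hp Hs HB HD Hs0 HsD. revert g HB. induction N; intros g HB.
  - rewrite !Ew_0. replace (s * (g [] - g [])) with 0 by ring. simpl. replace (0.9 * 0 * (s * s * (D * D))) with 0 by ring. lra.
  - set (m := Ew k p (S N) g).
    set (E0 := exp (0.9 * INR N * (s * s * (D * D)))).
    rewrite Ew_S.
    apply Rle_trans with (sumR (map (fun c => p c * (E0 * exp (s * (m - Ew k p N (fun w => g (c :: w)))))) (seq 0 k))).
    { apply sumR_map_le. intros c Hc. apply in_seq in Hc. apply Rmult_le_compat_l; [apply Hp; lia|].
      rewrite (Ew_ext k p N _ (fun w => exp (s * (m - Ew k p N (fun w => g (c :: w)))) *
                 exp (s * (Ew k p N (fun w => g (c :: w)) - g (c :: w))))).
      2:{ intros. rewrite <- exp_plus. f_equal. ring. }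
      rewrite Ew_scal. rewrite Rmult_comm. apply Rmult_le_compat_r; [left; apply exp_pos|].
      apply (IHN (fun w => g (c :: w))). apply BD_cons; auto; lia. }
    apply Rle_trans with (sumR (map (fun c => p c * (E0 * (1 + s * (m - Ew k p N (fun w => g (c :: w))) + 0.9 * (s * s * (D * D))))) (seq 0 k))).
    { apply sumR_map_le. intros c Hc. apply in_seq in Hc. apply Rmult_le_compat_l; [apply Hp; lia|].
      apply Rmult_le_compat_l; [left; apply exp_pos|].
      pose proof (Ew_mean_bound k p N g D c Hp Hs HB ltac:(lia)). fold m in H.
      remember (m - Ew k p N (fun w => g (c :: w))) as d eqn:Hd.
      assert (Rabs d <= D) by (apply Rabs_le; lra).
      assert (Rabs (s * d) <= 0.2).
      { rewrite Rabs_mult, Rabs_pos_eq by lra. apply Rle_trans with (s * D); auto. apply Rmult_le_compat_l; lra. }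
      apply Rle_trans with (1 + s * d + 0.9 * ((s * d) * (s * d))); [apply exp_quad; auto|].
      assert (d * d <= D * D) by (apply Rabs_le_between in H0; nra).
      assert (0 <= s * s) by nra. nra. }
    rewrite (sumR_map_ext _ (fun c => (E0 * (1 + s * m + 0.9 * (s * s * (D * D)))) * p c +
        (- (E0 * s)) * (p c * Ew k p N (fun w => g (c :: w))))) by (intros; ring).
    rewrite sumR_map_plus, !sumR_map_scal.
    change (sumR (map (fun c => p c) (seq 0 k))) with (sumR (map p (seq 0 k))). rewrite Hs.
    rewrite <- Ew_S. fold m.
    replace (E0 * (1 + s * m + 0.9 * (s * s * (D * D))) * 1 + - (E0 * s) * m) with
      (E0 * (1 + 0.9 * (s * s * (D * D)))) by ring.
    rewrite S_INR. unfold E0. replace (0.9 * (INR N + 1) * (s * s * (D * D))) with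
      (0.9 * INR N * (s * s * (D * D)) + 0.9 * (s * s * (D * D))) by ring.
    rewrite exp_plus. apply Rmult_le_compat_l; [left; apply exp_pos|].
    pose proof (exp_ineq1_le (0.9 * (s * s * (D * D)))). lra.
Qed.

Close Scope R_scope.

Definition ltlt (q r : nat * nat) : Prop := (fst q < fst r /\ snd q < snd r)%nat.
Definition lexlt (q r : nat * nat) : Prop :=
  (fst q < fst r \/ (fst q = fst r /\ snd q < snd r))%nat.

Definition inrange (m m' : nat) (q : nat * nat) : Prop :=
  (1 <= fst q <= m /\ 1 <= snd q <= m')%nat.

Definition valid (m m' : nat) (pi : list (nat * nat)) : Prop :=
  StronglySorted ltlt pi /\ Forall (inrange m m') pi.

Lemma SS_app {A} (R : A -> A -> Prop) l1 l2 :
  StronglySorted R l1 -> StronglySorted R l2 ->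
  (forall x y, In x l1 -> In y l2 -> R x y) -> StronglySorted R (l1 ++ l2).
Proof.
  induction l1; intros H1 H2 H; simpl; auto.
  apply StronglySorted_inv in H1. destruct H1. constructor.
  - apply IHl1; auto. intros; apply H; simpl; auto.
  - apply Forall_app; split; auto. apply Forall_forall. intros; apply H; simpl; auto.
Qed.

Lemma SS_app_inv {A} (R : A -> A -> Prop) l1 l2 :
  StronglySorted R (l1 ++ l2) ->
  StronglySorted R l1 /\ StronglySorted R l2 /\ (forall x y, In x l1 -> In y l2 -> R x y).
Proof.
  induction l1; intros H; simpl in *.
  - repeat split; auto. constructor. intros ? ? [].
  - apply StronglySorted_inv in H. destruct H as [H Hf]. destruct (IHl1 H) as [? [? ?]].
    rewrite Forall_app in Hf. destruct Hf as [Hf1 Hf2].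
    repeat split; auto.
    + constructor; auto.
    + intros x y [<-|Hx] Hy; auto. rewrite Forall_forall in Hf2; auto.
Qed.

Lemma SS_map_in {A B} (R : A -> A -> Prop) (R' : B -> B -> Prop) (f : A -> B) l :
  (forall x y, In x l -> In y l -> R x y -> R' (f x) (f y)) ->
  StronglySorted R l -> StronglySorted R' (map f l).
Proof.
  induction l; intros Hf H; simpl; constructor.
  - apply StronglySorted_inv in H. apply IHl; [|tauto]. intros; apply Hf; simpl; auto.
  - apply StronglySorted_inv in H. destruct H as [_ H]. rewrite Forall_forall in *.
    intros y Hy. apply in_map_iff in Hy. destruct Hy as [z [<- Hz]]. apply Hf; simpl; auto.
Qed.

Lemma SS_impl {A} (R R' : A -> A -> Prop) l :
  (forall x y, R x y -> R' x y) -> StronglySorted R l -> StronglySorted R' l.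
Proof.
  intros H Hs. rewrite <- (map_id l). apply (SS_map_in R); auto.
Qed.

Lemma SS_forall {A} (R : A -> A -> Prop) a l :
  StronglySorted R (a :: l) -> forall y, In y l -> R a y.
Proof. intros H. apply StronglySorted_inv in H. rewrite <- Forall_forall. tauto. Qed.

Lemma incr_sorted pi : incr pi = true <-> Sorted ltlt pi.
Proof.
  induction pi as [|[a b] t IH]; simpl.
  - split; auto.
  - destruct t as [|[c d] t'].
    + split; auto.
    + rewrite !andb_true_iff, !Nat.ltb_lt, IH. split.
      * intros [[H1 H2] H3]. constructor; auto. constructor. split; simpl; auto.
      * intros H. inversion H; subst. inversion H3; subst. destruct H1. simpl in *. auto.
Qed.

Lemma ltlt_trans : Relations_1.Transitive ltlt.
Proof. intros x y z [? ?] [? ?]; split; lia. Qed.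

Lemma incr_SS pi : incr pi = true <-> StronglySorted ltlt pi.
Proof.
  rewrite incr_sorted. split; [apply Sorted_StronglySorted, ltlt_trans | apply StronglySorted_Sorted].
Qed.

Lemma sublists_incl {T} (L pi : list T) : In pi (sublists L) -> incl pi L.
Proof.
  revert pi; induction L; simpl; intros pi H.
  - destruct H as [<-|[]]. apply incl_nil_l.
  - apply in_app_or in H. destruct H as [H|H].
    + apply in_map_iff in H. destruct H as [pi' [<- H]]. apply incl_cons; simpl; auto.
      apply incl_tl; auto.
    + apply incl_tl; auto.
Qed.

Lemma lexlt_trans x y z : lexlt x y -> lexlt y z -> lexlt x z.
Proof. unfold lexlt; lia. Qed.
Lemma lexlt_irrefl x : ~ lexlt x x.
Proof. unfold lexlt; lia. Qed.

Lemma sublist_in (L pi : list (nat * nat)) :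
  StronglySorted lexlt L -> StronglySorted lexlt pi -> incl pi L -> In pi (sublists L).
Proof.
  revert pi; induction L as [|a L IH]; intros pi HL Hp Hi; simpl.
  - destruct pi as [|q pi']; auto. exfalso. apply (Hi q); simpl; auto.
  - apply in_or_app. pose proof (SS_forall _ _ _ HL) as Ha. apply StronglySorted_inv in HL.
    destruct HL as [HL _]. destruct pi as [|q pi'].
    + right. apply IH; auto. apply incl_nil_l.
    + pose proof (SS_forall _ _ _ Hp) as Hq. apply StronglySorted_inv in Hp. destruct Hp as [Hp _].
      assert (Hqin : In q (a :: L)) by (apply Hi; simpl; auto).
      destruct Hqin as [Heq|HqL].
      * subst q. left. apply in_map. apply IH; auto. intros y Hy.
        assert (Hy' : In y (a :: L)) by (apply Hi; simpl; auto). destruct Hy' as [Heq|]; auto.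
        exfalso. subst y. apply (lexlt_irrefl a). apply Hq; auto.
      * right. apply IH; [assumption| |].
        { constructor; auto. apply Forall_forall; auto. }
        intros y [<-|Hy]; auto.
        assert (Hy' : In y (a :: L)) by (apply Hi; simpl; auto). destruct Hy' as [Heq|]; auto.
        exfalso. subst y. apply (lexlt_irrefl a). apply lexlt_trans with q; auto.
Qed.

Lemma seq_SS_lt s n : StronglySorted lt (seq s n).
Proof.
  revert s; induction n; intros s; simpl; constructor; auto.
  apply Forall_forall. intros y Hy. apply in_seq in Hy. lia.
Qed.

Lemma prod_SS xs n m :
  StronglySorted lt xs -> StronglySorted lexlt (list_prod xs (seq n m)).
Proof.
  induction xs as [|x xs IH]; intros H; simpl; [constructor|].
  pose proof (SS_forall _ _ _ H) as Hx. apply StronglySorted_inv in H. destruct H as [H _].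
  apply SS_app; auto.
  - apply (SS_map_in lt); [|apply seq_SS_lt]. intros; unfold lexlt; simpl; lia.
  - intros u v Hu Hv. apply in_map_iff in Hu. destruct Hu as [y [<- _]].
    destruct v as [v1 v2]. apply in_prod_iff in Hv. destruct Hv as [H0 _]. specialize (Hx _ H0). unfold lexlt; simpl; lia.
Qed.

Lemma align_iff m m' pi : In pi (alignments m m') <-> valid m m' pi.
Proof.
  unfold alignments, valid. rewrite filter_In, incr_SS. split.
  - intros [Hs Hi]. split; auto. apply sublists_incl in Hs. apply Forall_forall.
    intros q Hq. apply Hs in Hq. destruct q as [u v]. apply in_prod_iff in Hq.
    destruct Hq as [H1 H2]. apply in_seq in H1, H2. unfold inrange; simpl; lia.
  - intros [Hs Hr]. split; auto. apply sublist_in.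
    + apply prod_SS, seq_SS_lt.
    + apply (SS_impl ltlt); auto. intros x y [? ?]; unfold lexlt; lia.
    + intros [u v] Hq. rewrite Forall_forall in Hr. apply Hr in Hq. unfold inrange in Hq; simpl in Hq.
      apply in_prod; apply in_seq; lia.
Qed.

Lemma valid_nil m m' : valid m m' [].
Proof. split; constructor. Qed.

Open Scope R_scope.

Definition shift (a b : nat) (pi : list (nat * nat)) : list (nat * nat) :=
  map (fun q => (fst q + a, snd q + b)%nat) pi.

Definition gaps (P : list nat) (n : nat) : list nat :=
  filter (fun j => negb (existsb (fun v => Nat.eqb v j) P)) (seq 1 n).

Lemma existsb_proj (pr : nat * nat -> nat) pi j :
  existsb (fun q => Nat.eqb (pr q) j) pi = existsb (fun v => Nat.eqb v j) (map pr pi).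
Proof. induction pi; simpl; auto. rewrite IHpi; auto. Qed.

Lemma existsb_false_all (P : list nat) j :
  Forall (fun v => v <> j) P -> existsb (fun v => Nat.eqb v j) P = false.
Proof.
  induction P; simpl; intros H; auto. inversion H; subst. rewrite IHP; auto.
  destruct (Nat.eqb_spec a j); [contradiction|auto].
Qed.

Lemma existsb_shift (P : list nat) n j :
  existsb (fun v => Nat.eqb v (j + n)) (map (fun v => (v + n)%nat) P) =
  existsb (fun v => Nat.eqb v j) P.
Proof.
  induction P; simpl; auto. rewrite IHP. f_equal.
  destruct (Nat.eqb_spec (a + n) (j + n)), (Nat.eqb_spec a j); auto; lia.
Qed.

Lemma seq_shift_add s n m : seq (s + m) n = map (fun v => (v + m)%nat) (seq s n).
Proof.
  revert s; induction n; intros s; simpl; auto. f_equal. rewrite <- IHn. f_equal; lia.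
Qed.

Lemma gaps_split P1 P2 n1 n2 :
  Forall (fun v => 1 <= v <= n1)%nat P1 -> Forall (fun v => 1 <= v)%nat P2 ->
  gaps (P1 ++ map (fun v => (v + n1)%nat) P2) (n1 + n2) =
  gaps P1 n1 ++ map (fun v => (v + n1)%nat) (gaps P2 n2).
Proof.
  intros H1 H2. unfold gaps. rewrite seq_app, filter_app. f_equal.
  - apply filter_ext_in. intros j Hj. apply in_seq in Hj. rewrite existsb_app.
    rewrite (existsb_false_all (map _ P2)); [rewrite orb_false_r; auto|].
    apply Forall_map. eapply Forall_impl; [|exact H2]. simpl; intros; lia.
  - replace (1 + n1)%nat with (1 + n1)%nat by reflexivity. rewrite seq_shift_add.
    rewrite filter_map_swap. f_equal. apply filter_ext_in. intros j Hj. apply in_seq in Hj.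
    rewrite existsb_app, existsb_shift.
    rewrite (existsb_false_all P1); auto.
    eapply Forall_impl; [|exact H1]. simpl; intros; lia.
Qed.

Lemma letter_at_app_l x1 x2 j :
  (1 <= j <= length x1)%nat -> letter_at (x1 ++ x2) j = letter_at x1 j.
Proof. intros H. unfold letter_at. rewrite app_nth1; auto. lia. Qed.

Lemma letter_at_app_r x1 x2 j :
  (1 <= j)%nat -> letter_at (x1 ++ x2) (j + length x1) = letter_at x2 j.
Proof.
  intros H. unfold letter_at. rewrite app_nth2 by lia. do 2 f_equal. lia.
Qed.

Lemma score_split sc x1 x2 y1 y2 pi1 pi2 :
  Forall (inrange (length x1) (length y1)) pi1 ->
  Forall (fun q => 1 <= fst q /\ 1 <= snd q)%nat pi2 ->
  align_score sc (x1 ++ x2) (y1 ++ y2) (pi1 ++ shift (length x1) (length y1) pi2) =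
  align_score sc x1 y1 pi1 + align_score sc x2 y2 pi2.
Proof.
  intros H1 H2. unfold align_score.
  rewrite map_app, sumR_app.
  rewrite (sumR_map_ext (fun q => sc (letter_at (x1 ++ x2) (fst q)) (letter_at (y1 ++ y2) (snd q)))
     (fun q => sc (letter_at x1 (fst q)) (letter_at y1 (snd q))) pi1).
  2:{ intros q Hq. rewrite Forall_forall in H1. destruct (H1 q Hq).
      rewrite letter_at_app_l, letter_at_app_l; auto. }
  unfold shift. rewrite map_map. simpl.
  rewrite (sumR_map_ext _ (fun q => sc (letter_at x2 (fst q)) (letter_at y2 (snd q))) pi2).
  2:{ intros q Hq. rewrite Forall_forall in H2. destruct (H2 q Hq).
      rewrite !letter_at_app_r; auto. }
  set (F := fun (pr : nat * nat -> nat) pi j => negb (existsb (fun q => Nat.eqb (pr q) j) pi)).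
  change (fun j => negb (existsb (fun q => Nat.eqb (fst q) j) ?pi)) with (F fst pi).
  change (fun j => negb (existsb (fun q => Nat.eqb (snd q) j) ?pi)) with (F snd pi).
  assert (HF : forall pr pi n, filter (F pr pi) (seq 1 n) = gaps (map pr pi) n).
  { intros. unfold gaps, F. apply filter_ext. intros. rewrite existsb_proj. auto. }
  rewrite !HF, !length_app.
  rewrite !map_app, !map_map. simpl.
  replace (map (fun x => (fst x + length x1)%nat) pi2) with (map (fun v => (v + length x1)%nat) (map fst pi2)) by (rewrite map_map; reflexivity).
  replace (map (fun x => (snd x + length y1)%nat) pi2) with (map (fun v => (v + length y1)%nat) (map snd pi2)) by (rewrite map_map; reflexivity).
  rewrite (gaps_split (map fst pi1) (map fst pi2)).
  2:{ apply Forall_map. eapply Forall_impl; [|exact H1]. unfold inrange; simpl; intros a [? ?]; lia. }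
  2:{ apply Forall_map. eapply Forall_impl; [|exact H2]. simpl; intros a [? ?]; lia. }
  rewrite (gaps_split (map snd pi1) (map snd pi2)).
  2:{ apply Forall_map. eapply Forall_impl; [|exact H1]. unfold inrange; simpl; intros a [? ?]; lia. }
  2:{ apply Forall_map. eapply Forall_impl; [|exact H2]. simpl; intros a [? ?]; lia. }
  rewrite !map_app, !sumR_app, !map_map.
  rewrite (sumR_map_ext (fun j => sc (letter_at (x1 ++ x2) j) None) (fun j => sc (letter_at x1 j) None)).
  2:{ intros j Hj. unfold gaps in Hj. apply filter_In in Hj. destruct Hj as [Hj _]. apply in_seq in Hj.
      rewrite letter_at_app_l; auto; lia. }
  rewrite (sumR_map_ext (fun j => sc None (letter_at (y1 ++ y2) j)) (fun j => sc None (letter_at y1 j))).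
  2:{ intros j Hj. unfold gaps in Hj. apply filter_In in Hj. destruct Hj as [Hj _]. apply in_seq in Hj.
      rewrite letter_at_app_l; auto; lia. }
  rewrite (sumR_map_ext (fun j => sc (letter_at (x1 ++ x2) (j + length x1)) None) (fun j => sc (letter_at x2 j) None)).
  2:{ intros j Hj. unfold gaps in Hj. apply filter_In in Hj. destruct Hj as [Hj _]. apply in_seq in Hj.
      rewrite letter_at_app_r; auto; lia. }
  rewrite (sumR_map_ext (fun j => sc None (letter_at (y1 ++ y2) (j + length y1))) (fun j => sc None (letter_at y2 j))).
  2:{ intros j Hj. unfold gaps in Hj. apply filter_In in Hj. destruct Hj as [Hj _]. apply in_seq in Hj.
      rewrite letter_at_app_r; auto; lia. }
  lra.
Qed.

Close Scope R_scope.

Definition sep (pi : list (nat * nat)) (a1 b1 : nat) : Prop :=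
  forall q, In q pi -> (fst q <= a1 /\ snd q <= b1) \/ (a1 < fst q /\ b1 < snd q).

Lemma all_above a b pi a1 b1 :
  valid a b pi -> (forall q, In q pi -> a1 < fst q /\ b1 < snd q) ->
  pi = shift a1 b1 (map (fun q => (fst q - a1, snd q - b1)) pi) /\
  valid (a - a1) (b - b1) (map (fun q => (fst q - a1, snd q - b1)) pi).
Proof.
  intros [Hs Hr] H. split.
  - unfold shift. rewrite map_map. simpl. rewrite <- (map_id pi) at 1. apply map_ext_in.
    intros [u v] Hq. apply H in Hq. simpl in *. f_equal; lia.
  - split.
    + apply (SS_map_in ltlt); auto. intros x y Hx Hy [? ?]. apply H in Hx; apply H in Hy.
      unfold ltlt; simpl; lia.
    + apply Forall_map. rewrite Forall_forall in *. intros q Hq. specialize (Hr q Hq).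
      specialize (H q Hq). unfold inrange in *; simpl; lia.
Qed.

Lemma decomp a b pi a1 b1 :
  valid a b pi -> a1 <= a -> b1 <= b -> sep pi a1 b1 ->
  exists pi1 pi2, pi = pi1 ++ shift a1 b1 pi2 /\ valid a1 b1 pi1 /\ valid (a - a1) (b - b1) pi2.
Proof.
  induction pi as [|q pi IH]; intros Hv Ha Hb Hsep.
  - exists [], []. repeat split; constructor.
  - destruct Hv as [Hs Hr]. pose proof (SS_forall _ _ _ Hs) as Hq.
    apply StronglySorted_inv in Hs. destruct Hs as [Hs _]. inversion Hr; subst.
    destruct (Hsep q (or_introl eq_refl)) as [Hle|Hgt].
    + destruct (IH (conj Hs H2) Ha Hb) as [pi1 [pi2 [Heq [Hv1 Hv2]]]].
      { intros r Hr'. apply Hsep; simpl; auto. }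
      exists (q :: pi1), pi2. split; [rewrite Heq; reflexivity|]. split; auto.
      destruct Hv1 as [Hs1 Hr1]. split.
      * constructor; auto. apply Forall_forall. intros r Hr'. apply Hq. rewrite Heq. apply in_or_app; auto.
      * constructor; auto. unfold inrange in *; lia.
    + exists []. exists (map (fun q => (fst q - a1, snd q - b1)) (q :: pi)).
      assert (Hall : forall r, In r (q :: pi) -> a1 < fst r /\ b1 < snd r).
      { intros r [<-|Hr']; auto. apply Hq in Hr'. destruct Hr'. lia. }
      destruct (all_above a b (q :: pi) a1 b1) as [E V]; auto.
      { split; auto. constructor; auto. apply Forall_forall; auto. }
      split; [exact E|]. split; auto. apply valid_nil.
Qed.

Lemma filter_all_false {A} (P : A -> bool) l :
  (forall r, In r l -> P r = false) -> filter P l = [] /\ filter (fun q => negb (P q)) l = l.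
Proof.
  induction l as [|r l IH]; intros H; simpl; auto.
  rewrite H by (simpl; auto). simpl. destruct IH as [-> ->]; auto.
  intros; apply H; simpl; auto.
Qed.

Lemma SS_split_filter (P : nat * nat -> bool) pi :
  StronglySorted ltlt pi -> (forall q r, ltlt q r -> P r = true -> P q = true) ->
  pi = filter P pi ++ filter (fun q => negb (P q)) pi.
Proof.
  induction pi as [|q pi IH]; intros Hs HP; simpl; auto.
  pose proof (SS_forall _ _ _ Hs) as Hq. apply StronglySorted_inv in Hs. destruct Hs as [Hs _].
  destruct (P q) eqn:E; simpl.
  - rewrite <- IH; auto.
  - destruct (filter_all_false P pi) as [-> ->]; auto.
    intros r Hr. destruct (P r) eqn:E'; auto. rewrite (HP q r) in E; auto.
Qed.

Lemma box a b pi (P : nat * nat -> bool) :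
  valid a b pi -> (forall q r, ltlt q r -> P r = true -> P q = true) ->
  exists z w : nat * nat,
    fst z < fst w /\ snd z < snd w /\ fst w <= S a /\ snd w <= S b /\
    (forall q, In q pi -> P q = true -> fst q <= fst z /\ snd q <= snd z) /\
    (forall q, In q pi -> P q = false -> fst w <= fst q /\ snd w <= snd q) /\
    (z = (0, 0) \/ (P z = true /\ In z pi)) /\
    (w = (S a, S b) \/ (P w = false /\ In w pi)).
Proof.
  intros [Hs Hr] HP.
  pose proof (SS_split_filter P pi Hs HP) as Hsplit.
  remember (filter P pi) as l1 eqn:E1. remember (filter (fun q => negb (P q)) pi) as l2 eqn:E2.
  assert (Hl1 : forall q, In q pi -> P q = true -> In q l1) by (intros q Hq HPq; rewrite E1; apply filter_In; split; auto).
  assert (Hl2 : forall q, In q pi -> P q = false -> In q l2) by (intros q Hq HPq; rewrite E2; apply filter_In; split; [auto| rewrite HPq; reflexivity]).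
  assert (Hl1' : forall q, In q l1 -> In q pi /\ P q = true) by (intros q Hq; rewrite E1 in Hq; apply filter_In in Hq; auto).
  assert (Hl2' : forall q, In q l2 -> In q pi /\ P q = false).
  { intros q Hq. rewrite E2 in Hq. apply filter_In in Hq. destruct Hq as [Hq1 Hq2]. split; [auto|]. destruct (P q); [discriminate|reflexivity]. }
  assert (Hs12 : StronglySorted ltlt l1 /\ StronglySorted ltlt l2 /\ (forall x y, In x l1 -> In y l2 -> ltlt x y)).
  { rewrite Hsplit in Hs. apply SS_app_inv in Hs. auto. }
  destruct Hs12 as [Hs1 [Hs2 Hcross]]. clear E1 E2 Hsplit.
  rewrite Forall_forall in Hr.
  assert (Hz : exists z, (forall q, In q pi -> P q = true -> fst q <= fst z /\ snd q <= snd z) /\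
                         (z = (0, 0) \/ (P z = true /\ In z pi))).
  { destruct l1 as [|q0 l1'].
    - exists (0, 0). split; auto. intros q Hq HPq. specialize (Hl1 q Hq HPq). destruct Hl1.
    - destruct (exists_last (l := q0 :: l1')) as [l [z Ez]]; [discriminate|].
      rewrite Ez in *.
      exists z. split.
      + intros q Hq HPq. specialize (Hl1 q Hq HPq).
        apply SS_app_inv in Hs1. destruct Hs1 as [_ [_ Hc]].
        apply in_app_or in Hl1. destruct Hl1 as [Hl1|[<-|[]]]; [|lia].
        specialize (Hc q z Hl1 (or_introl eq_refl)). destruct Hc; lia.
      + right. assert (In z (l ++ [z])) by (apply in_or_app; simpl; auto). apply Hl1' in H. tauto. }
  assert (Hw : exists w, (forall q, In q pi -> P q = false -> fst w <= fst q /\ snd w <= snd q) /\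
                         (w = (S a, S b) \/ (P w = false /\ In w pi))).
  { destruct l2 as [|w l2'].
    - exists (S a, S b). split; auto. intros q Hq HPq. specialize (Hl2 q Hq HPq). destruct Hl2.
    - exists w. split.
      + intros q Hq HPq. specialize (Hl2 q Hq HPq).
        destruct Hl2 as [<-|Hl2]; [lia|].
        pose proof (SS_forall _ _ _ Hs2 q Hl2). destruct H; lia.
      + right. assert (In w (w :: l2')) by (simpl; auto). apply Hl2' in H. tauto. }
  destruct Hz as [z [Hz1 Hz2]]. destruct Hw as [w [Hw1 Hw2]].
  exists z, w.
  assert (Hzw : fst z < fst w /\ snd z < snd w).
  { destruct Hz2 as [->|[HPz Hz]]; destruct Hw2 as [->|[HPw Hw]]; simpl.
    - lia.
    - specialize (Hr w Hw); unfold inrange in Hr; lia.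
    - specialize (Hr z Hz); unfold inrange in Hr; lia.
    - apply Hcross; [apply Hl1|apply Hl2]; auto. }
  assert (Hwr : fst w <= S a /\ snd w <= S b).
  { destruct Hw2 as [->|[_ Hw]]; simpl; auto. specialize (Hr w Hw); unfold inrange in Hr; lia. }
  do 4 (split; [lia|]). split; [exact Hz1|]. split; [exact Hw1|]. split; assumption.
Qed.

Lemma cut_x a b pi a1 :
  valid a b pi -> a1 <= a -> exists b1, b1 <= b /\ sep pi a1 b1.
Proof.
  intros Hv Ha.
  destruct (box a b pi (fun q => Nat.leb (fst q) a1) Hv) as [z [w [H1 [H2 [H3 [H4 [H5 [H6 [H7 H8]]]]]]]]].
  { intros q r [? ?] Hr. apply Nat.leb_le in Hr. apply Nat.leb_le. lia. }
  assert (fst z <= a1).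
  { destruct H7 as [->|[E _]]; simpl; [lia|]. apply Nat.leb_le in E; auto. }
  assert (a1 < fst w).
  { destruct H8 as [->|[E _]]; simpl; [lia|]. apply Nat.leb_gt in E; auto. }
  exists (snd z). split; [lia|]. intros q Hq. destruct (Nat.leb (fst q) a1) eqn:E.
  - left. specialize (H5 q Hq E). apply Nat.leb_le in E. lia.
  - right. specialize (H6 q Hq E). lia.
Qed.

Lemma cut_T a b pi T :
  valid a b pi -> T <= a + b ->
  exists a1 b1, a1 <= a /\ b1 <= b /\ (a1 + b1 = T \/ a1 + b1 = S T) /\ sep pi a1 b1.
Proof.
  intros Hv HT.
  destruct (box a b pi (fun q => Nat.leb (fst q + snd q) (S T)) Hv) as [z [w [H1 [H2 [H3 [H4 [H5 [H6 [H7 H8]]]]]]]]].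
  { intros q r [? ?] Hr. apply Nat.leb_le in Hr. apply Nat.leb_le. lia. }
  assert (fst z + snd z <= S T).
  { destruct H7 as [->|[E _]]; simpl; [lia|]. apply Nat.leb_le in E; auto. }
  assert (S (S T) <= fst w + snd w).
  { destruct H8 as [->|[E _]]; simpl; [lia|]. apply Nat.leb_gt in E; lia. }
  set (s := if Nat.leb (fst z + snd z) T then T else S T).
  assert (Hs : (s = T \/ s = S T) /\ fst z + snd z <= s /\ s <= fst w + snd w - 2).
  { unfold s. destruct (Nat.leb_spec (fst z + snd z) T); lia. }
  set (a1 := Nat.min (fst w - 1) (s - snd z)).
  exists a1, (s - a1).
  assert (fst z <= a1 < fst w /\ snd z <= s - a1 < snd w) by (unfold a1; lia).
  split; [lia|]. split; [lia|]. split; [lia|].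
  intros q Hq. destruct (Nat.leb (fst q + snd q) (S T)) eqn:E.
  - left. specialize (H5 q Hq E). lia.
  - right. specialize (H6 q Hq E). lia.
Qed.

Open Scope R_scope.

Lemma fold_Rmax_ge d l v : In v l -> v <= fold_right Rmax d l.
Proof.
  induction l; simpl; intros H; [destruct H|]. destruct H as [<-|H].
  - apply Rmax_l.
  - eapply Rle_trans; [apply IHl; auto| apply Rmax_r].
Qed.

Lemma fold_Rmax_ge_d d l : d <= fold_right Rmax d l.
Proof. induction l; simpl; [lra|]. eapply Rle_trans; [apply IHl|apply Rmax_r]. Qed.

Lemma fold_Rmax_le d l c : d <= c -> (forall v, In v l -> v <= c) -> fold_right Rmax d l <= c.
Proof.
  induction l; simpl; intros Hd H; auto. apply Rmax_lub; auto.
Qed.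

Lemma LS_ge sc x y pi : valid (length x) (length y) pi -> align_score sc x y pi <= LS sc x y.
Proof.
  intros H. unfold LS. apply fold_Rmax_ge. apply in_map. apply align_iff; auto.
Qed.

Lemma LS_le sc x y c :
  (forall pi, valid (length x) (length y) pi -> align_score sc x y pi <= c) -> LS sc x y <= c.
Proof.
  intros H. unfold LS. apply fold_Rmax_le.
  - apply H, valid_nil.
  - intros v Hv. apply in_map_iff in Hv. destruct Hv as [pi [<- Hpi]]. apply H, align_iff; auto.
Qed.

Lemma valid_pos m m' pi : valid m m' pi -> Forall (fun q => 1 <= fst q /\ 1 <= snd q)%nat pi.
Proof.
  intros [_ H]. eapply Forall_impl; [|exact H]. unfold inrange; intros; lia.
Qed.

Lemma valid_widen m m' n n' pi : (m <= n)%nat -> (m' <= n')%nat -> valid m m' pi -> valid n n' pi.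
Proof.
  intros H1 H2 [Hs Hr]. split; auto. eapply Forall_impl; [|exact Hr]. unfold inrange; intros; lia.
Qed.

Lemma valid_concat a1 b1 a2 b2 pi1 pi2 :
  valid a1 b1 pi1 -> valid a2 b2 pi2 -> valid (a1 + a2) (b1 + b2) (pi1 ++ shift a1 b1 pi2).
Proof.
  intros [Hs1 Hr1] [Hs2 Hr2]. rewrite Forall_forall in *. split.
  - apply SS_app; auto.
    + apply (SS_map_in ltlt); auto. intros x y _ _ [? ?]. unfold ltlt; simpl; lia.
    + intros x y Hx Hy. unfold shift in Hy. apply in_map_iff in Hy. destruct Hy as [z [<- Hz]].
      apply Hr1 in Hx. apply Hr2 in Hz. unfold inrange, ltlt in *; simpl; lia.
  - apply Forall_app. split.
    + apply Forall_forall. intros q Hq. apply Hr1 in Hq. unfold inrange in *; lia.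
    + apply Forall_map. apply Forall_forall. intros q Hq. apply Hr2 in Hq. unfold inrange in *; simpl; lia.
Qed.

Lemma LS_super sc x1 y1 x2 y2 : LS sc x1 y1 + LS sc x2 y2 <= LS sc (x1 ++ x2) (y1 ++ y2).
Proof.
  assert (H : forall pi1 pi2, valid (length x1) (length y1) pi1 -> valid (length x2) (length y2) pi2 ->
            align_score sc x1 y1 pi1 + align_score sc x2 y2 pi2 <= LS sc (x1 ++ x2) (y1 ++ y2)).
  { intros pi1 pi2 H1 H2. rewrite <- score_split; [| destruct H1; auto | apply (valid_pos _ _ _ H2)].
    apply LS_ge. rewrite !length_app. apply valid_concat; auto. }
  assert (H' : forall pi2, valid (length x2) (length y2) pi2 ->
            LS sc x1 y1 + align_score sc x2 y2 pi2 <= LS sc (x1 ++ x2) (y1 ++ y2)).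
  { intros pi2 H2. assert (LS sc x1 y1 <= LS sc (x1 ++ x2) (y1 ++ y2) - align_score sc x2 y2 pi2); [|lra].
    apply LS_le. intros pi1 H1. specialize (H pi1 pi2 H1 H2). lra. }
  assert (LS sc x2 y2 <= LS sc (x1 ++ x2) (y1 ++ y2) - LS sc x1 y1); [|lra].
  apply LS_le. intros pi2 H2. specialize (H' pi2 H2). lra.
Qed.

Lemma score_decomp sc (x y : list nat) pi a1 b1 :
  valid (length x) (length y) pi -> (a1 <= length x)%nat -> (b1 <= length y)%nat -> sep pi a1 b1 ->
  exists pi1 pi2, valid a1 b1 pi1 /\ valid (length x - a1) (length y - b1) pi2 /\
    forall x' y' : list nat, length x' = length x -> length y' = length y ->
      align_score sc x' y' pi = align_score sc (firstn a1 x') (firstn b1 y') pi1 +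
                                align_score sc (skipn a1 x') (skipn b1 y') pi2.
Proof.
  intros Hv Ha Hb Hs. destruct (decomp _ _ _ _ _ Hv Ha Hb Hs) as [pi1 [pi2 [E [V1 V2]]]].
  exists pi1, pi2. split; auto. split; auto. intros x' y' Hx Hy.
  rewrite <- (firstn_skipn a1 x') at 1. rewrite <- (firstn_skipn b1 y') at 1.
  rewrite E.
  assert (length (firstn a1 x') = a1) by (rewrite length_firstn; lia).
  assert (length (firstn b1 y') = b1) by (rewrite length_firstn; lia).
  replace (shift a1 b1 pi2) with (shift (length (firstn a1 x')) (length (firstn b1 y')) pi2) by (rewrite H, H0; reflexivity).
  apply score_split.
  - rewrite H, H0. destruct V1; auto.
  - apply (valid_pos _ _ _ V2).
Qed.

Lemma LS_cutT sc (x y : list nat) T c :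
  (T <= length x + length y)%nat ->
  (forall a1 b1, (a1 <= length x)%nat -> (b1 <= length y)%nat -> (a1 + b1 = T \/ a1 + b1 = S T)%nat ->
     LS sc (firstn a1 x) (firstn b1 y) + LS sc (skipn a1 x) (skipn b1 y) <= c) ->
  LS sc x y <= c.
Proof.
  intros HT H. apply LS_le. intros pi Hv.
  destruct (cut_T _ _ _ T Hv HT) as [a1 [b1 [Ha [Hb [Hab Hs]]]]].
  destruct (score_decomp sc x y pi a1 b1 Hv Ha Hb Hs) as [pi1 [pi2 [V1 [V2 E]]]].
  rewrite E by auto. eapply Rle_trans; [|apply (H a1 b1); auto].
  apply Rplus_le_compat; apply LS_ge.
  - rewrite !length_firstn. replace (Nat.min a1 (length x)) with a1 by lia.
    replace (Nat.min b1 (length y)) with b1 by lia. auto.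
  - rewrite !length_skipn. auto.
Qed.

Lemma in_Astar_Some k c : (c < k)%nat -> In (Some c) (Astar k).
Proof. intros H. right. apply in_map, in_seq. lia. Qed.

Lemma in_Astar_None k : In None (Astar k).
Proof. left; auto. Qed.

Lemma letter_in_Astar k x j : (1 <= k)%nat -> gw k x -> In (letter_at x j) (Astar k).
Proof.
  intros Hk Hx. unfold letter_at. apply in_Astar_Some.
  destruct (Nat.lt_ge_cases (j - 1) (length x)) as [H|H].
  - unfold gw in Hx. rewrite Forall_forall in Hx. apply Hx, nth_In; auto.
  - rewrite nth_overflow by auto. lia.
Qed.

Lemma gw_firstn k n x : gw k x -> gw k (firstn n x).
Proof.
  unfold gw. revert x; induction n; intros x H; simpl; [constructor|].
  destruct x; [constructor|]. inversion H; subst. constructor; auto.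
Qed.

Lemma gw_skipn k n x : gw k x -> gw k (skipn n x).
Proof.
  unfold gw. revert x; induction n; intros x H; simpl; auto.
  destruct x; [constructor|]. inversion H; subst. auto.
Qed.

Lemma gw_app k x y : gw k x -> gw k y -> gw k (x ++ y).
Proof. unfold gw; intros; apply Forall_app; auto. Qed.

Lemma Sdelta_bound k sc c d e :
  In c (Astar k) -> In d (Astar k) -> In e (Astar k) -> Rabs (sc c d - sc c e) <= Sdelta k sc.
Proof.
  intros Hc Hd He. unfold Sdelta. apply fold_Rmax_ge.
  apply in_flat_map. exists c. split; auto. apply in_flat_map. exists d. split; auto.
  apply in_map_iff. exists e. split; auto.
Qed.

Definition swap (pi : list (nat * nat)) := map (fun q => (snd q, fst q)) pi.

Lemma existsb_map' {A B} (f : B -> bool) (g : A -> B) l :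
  existsb f (map g l) = existsb (fun a => f (g a)) l.
Proof. induction l; simpl; auto. rewrite IHl; auto. Qed.

Lemma score_swap k sc x y pi :
  (1 <= k)%nat -> (forall c d, In c (Astar k) -> In d (Astar k) -> sc c d = sc d c) ->
  gw k x -> gw k y -> align_score sc x y pi = align_score sc y x (swap pi).
Proof.
  intros Hk Hs Hx Hy. unfold align_score, swap. rewrite !map_map. simpl.
  rewrite (sumR_map_ext (fun q => sc (letter_at x (fst q)) (letter_at y (snd q)))
                        (fun q => sc (letter_at y (snd q)) (letter_at x (fst q)))).
  2:{ intros; apply Hs; apply letter_in_Astar; auto. }
  rewrite !(filter_ext (fun j => negb (existsb (fun q => Nat.eqb (fst q) j) (map (fun q => (snd q, fst q)) pi))) (fun j => negb (existsb (fun q => Nat.eqb (snd q) j) pi))).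
  2:{ intros j. rewrite existsb_map'. reflexivity. }
  rewrite !(filter_ext (fun j => negb (existsb (fun q => Nat.eqb (snd q) j) (map (fun q => (snd q, fst q)) pi))) (fun j => negb (existsb (fun q => Nat.eqb (fst q) j) pi))).
  2:{ intros j. rewrite existsb_map'. reflexivity. }
  rewrite (sumR_map_ext (fun j => sc (letter_at x j) None) (fun j => sc None (letter_at x j))).
  2:{ intros; apply Hs; [apply letter_in_Astar; auto| apply in_Astar_None]. }
  rewrite (sumR_map_ext (fun j => sc None (letter_at y j)) (fun j => sc (letter_at y j) None)).
  2:{ intros; apply Hs; [apply in_Astar_None|apply letter_in_Astar; auto]. }
  lra.
Qed.

Lemma valid_swap m m' pi : valid m m' pi -> valid m' m (swap pi).
Proof.
  intros [Hs Hr]. split.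
  - apply (SS_map_in ltlt); auto. intros x y _ _ [? ?]. unfold ltlt; simpl; lia.
  - apply Forall_map. eapply Forall_impl; [|exact Hr]. unfold inrange; simpl; intros; lia.
Qed.

Lemma LS_sym k sc x y :
  (1 <= k)%nat -> (forall c d, In c (Astar k) -> In d (Astar k) -> sc c d = sc d c) ->
  gw k x -> gw k y -> LS sc x y = LS sc y x.
Proof.
  intros Hk Hs Hx Hy. apply Rle_antisym; apply LS_le; intros pi Hv.
  - rewrite (score_swap k sc x y pi) by auto. apply LS_ge, valid_swap; auto.
  - rewrite (score_swap k sc y x pi) by auto. apply LS_ge, valid_swap; auto.
Qed.

Lemma valid_1 m rho : valid 1 m rho -> rho = [] \/ exists nu, rho = [(1%nat, nu)] /\ (1 <= nu <= m)%nat.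
Proof.
  intros [Hs Hr]. destruct rho as [|q [|r t]]; auto.
  - right. rewrite Forall_forall in Hr. specialize (Hr _ (or_introl eq_refl)).
    destruct q as [u v]. unfold inrange in Hr; simpl in Hr.
    exists v. split; [f_equal; f_equal; lia| lia].
  - exfalso. pose proof (SS_forall _ _ _ Hs r (or_introl eq_refl)) as [H1 _].
    rewrite Forall_forall in Hr. pose proof (Hr q (or_introl eq_refl)). pose proof (Hr r (or_intror (or_introl eq_refl))).
    unfold inrange in *. lia.
Qed.

Lemma firstn_len_app (u w : list nat) : firstn (length u) (u ++ w) = u.
Proof. induction u; simpl; auto. f_equal; auto. Qed.

Lemma skipn_len_app (u w : list nat) : skipn (length u) (u ++ w) = w.
Proof. induction u; simpl; auto. Qed.

Lemma score_single_diff sc c c' z rho :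
  (rho = [] \/ exists nu, rho = [(1%nat, nu)]) ->
  exists X, (X = None \/ exists nu, X = letter_at z nu) /\
    align_score sc [c] z rho - align_score sc [c'] z rho = sc (Some c) X - sc (Some c') X.
Proof.
  intros [->|[nu ->]].
  - exists None. split; auto. unfold align_score, letter_at, sumR. simpl. ring.
  - exists (letter_at z nu). split; eauto. unfold align_score, letter_at, sumR. simpl. ring.
Qed.

Lemma LS_BDx k sc u v y c c' :
  (1 <= k)%nat -> (forall c d, In c (Astar k) -> In d (Astar k) -> sc c d = sc d c) ->
  gw k u -> gw k v -> gw k y -> (c < k)%nat -> (c' < k)%nat ->
  LS sc (u ++ c :: v) y <= LS sc (u ++ c' :: v) y + Sdelta k sc.
Proof.
  intros Hk Hs Hu Hv Hy Hc Hc'.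
  apply LS_le. intros pi Hpi.
  assert (Hlen : length (u ++ c :: v) = length (u ++ c' :: v)) by (rewrite !length_app; reflexivity).
  destruct (cut_x _ _ _ (length u) Hpi) as [b1 [Hb1 Hsep]]; [rewrite length_app; lia|].
  destruct (score_decomp sc (u ++ c :: v) y pi (length u) b1 Hpi) as [pi1 [pi2 [V1 [V2 E]]]]; auto.
  { rewrite length_app; lia. }
  rewrite length_app in V2. replace (length u + length (c :: v) - length u)%nat with (length (c :: v)) in V2 by lia.
  destruct (cut_x _ _ _ 1 V2) as [b2 [Hb2 Hsep2]]; [simpl; lia|].
  destruct (score_decomp sc (c :: v) (skipn b1 y) pi2 1 b2) as [r1 [r2 [W1 [W2 E2]]]]; auto.
  { rewrite length_skipn; auto. }
  { simpl; lia. }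
  { rewrite length_skipn; lia. }
  assert (HS : forall a, (a < k)%nat -> align_score sc (u ++ a :: v) y pi =
      align_score sc u (firstn b1 y) pi1 + (align_score sc [a] (firstn b2 (skipn b1 y)) r1 +
       align_score sc v (skipn b2 (skipn b1 y)) r2)).
  { intros a Ha. rewrite E; [| rewrite !length_app; reflexivity| reflexivity].
    rewrite firstn_len_app, skipn_len_app. rewrite E2; simpl; auto. }
  rewrite (HS c Hc). eapply Rle_trans; [|apply Rplus_le_compat_r; apply (LS_ge sc (u ++ c' :: v) y pi); rewrite <- Hlen; auto].
  rewrite (HS c' Hc').
  assert (Hr1 : r1 = [] \/ exists nu, r1 = [(1%nat, nu)]).
  { destruct (valid_1 _ _ W1) as [->|[nu [-> _]]]; eauto. }
  destruct (score_single_diff sc c c' (firstn b2 (skipn b1 y)) r1 Hr1) as [X [HX HD]].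
  assert (HXA : In X (Astar k)).
  { destruct HX as [->|[nu ->]]; [apply in_Astar_None|]. apply letter_in_Astar; auto.
    apply gw_firstn, gw_skipn; auto. }
  assert (Rabs (sc X (Some c) - sc X (Some c')) <= Sdelta k sc).
  { apply Sdelta_bound; auto; apply in_Astar_Some; auto. }
  rewrite (Hs X (Some c)), (Hs X (Some c')) in H by (auto; apply in_Astar_Some; auto).
  apply Rabs_le_between in H. lra.
Qed.

Lemma shift_nil a b : shift a b [] = [].
Proof. reflexivity. Qed.

Lemma score_nil_split sc (z1 z2 : list nat) :
  align_score sc [] (z1 ++ z2) [] = align_score sc [] z1 [] + align_score sc [] z2 [].
Proof.
  change (align_score sc ([] ++ []) (z1 ++ z2) ([] ++ shift (length (@nil nat)) (length z1) []) =
          align_score sc [] z1 [] + align_score sc [] z2 []).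
  apply score_split; constructor.
Qed.

Lemma small_snoc k sc B c z rho :
  (1 <= k)%nat -> (forall d e, In d (Astar k) -> In e (Astar k) -> Rabs (sc d e) <= B) ->
  gw k z -> (c < k)%nat -> valid 1 (length z) rho ->
  align_score sc [c] z rho <= align_score sc [] z [] + 2 * B.
Proof.
  intros Hk HB Hz Hc Hv.
  assert (HB0 : 0 <= B) by (specialize (HB None None (in_Astar_None k) (in_Astar_None k)); pose proof (Rabs_pos (sc None None)); lra).
  destruct (valid_1 _ _ Hv) as [->|[nu [-> Hnu]]].
  - replace (align_score sc [c] z []) with (sc (Some c) None + align_score sc [] z []).
    + specialize (HB (Some c) None (in_Astar_Some k c Hc) (in_Astar_None k)). apply Rabs_le_between in HB. lra.
    + unfold align_score, letter_at, sumR. simpl. ring.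
  - set (z1 := firstn (nu - 1) z). set (z2 := skipn (nu - 1) z).
    assert (Hz12 : z = z1 ++ z2) by (symmetry; apply firstn_skipn).
    assert (Hl1 : length z1 = (nu - 1)%nat) by (unfold z1; rewrite length_firstn; lia).
    assert (Hl2 : length z2 = (length z - (nu - 1))%nat) by (unfold z2; rewrite length_skipn; lia).
    destruct z2 as [|d r] eqn:Ez2; [simpl in Hl2; lia|].
    assert (E1 : align_score sc [c] z [(1%nat, nu)] =
                 align_score sc [] z1 [] + align_score sc [c] (d :: r) [(1%nat, 1%nat)]).
    { rewrite Hz12. change [c] with ([] ++ [c]).
      replace [(1%nat, nu)] with ([] ++ shift (length (@nil nat)) (length z1) [(1%nat, 1%nat)]).
      - apply score_split; repeat constructor.
      - rewrite Hl1. unfold shift. simpl. do 3 f_equal. lia. }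
    assert (E2 : align_score sc [c] (d :: r) [(1%nat, 1%nat)] =
                 align_score sc [c] [d] [(1%nat, 1%nat)] + align_score sc [] r []).
    { change (d :: r) with ([d] ++ r). change [c] with ([c] ++ []) at 1.
      change [(1%nat, 1%nat)] with ([(1%nat, 1%nat)] ++ shift (length [c]) (length [d]) []) at 1.
      apply score_split; repeat constructor. }
    assert (E3 : align_score sc [] z [] = align_score sc [] z1 [] + align_score sc [] [d] [] + align_score sc [] r []).
    { rewrite Hz12. rewrite score_nil_split. change (d :: r) with ([d] ++ r). rewrite score_nil_split. ring. }
    assert (E4 : align_score sc [c] [d] [(1%nat, 1%nat)] = sc (Some c) (Some d)).
    { unfold align_score, letter_at, sumR. simpl. ring. }
    assert (E5 : align_score sc [] [d] [] = sc None (Some d)).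
    { unfold align_score, letter_at, sumR. simpl. ring. }
    assert (Hd : (d < k)%nat).
    { assert (gw k (d :: r)) by (rewrite <- Ez2; apply gw_skipn; auto). inversion H; auto. }
    pose proof (HB (Some c) (Some d) (in_Astar_Some k c Hc) (in_Astar_Some k d Hd)).
    pose proof (HB None (Some d) (in_Astar_None k) (in_Astar_Some k d Hd)).
    apply Rabs_le_between in H. apply Rabs_le_between in H0.
    rewrite E1, E2, E3, E4, E5. lra.
Qed.

Lemma LS_snoc k sc B x y c :
  (1 <= k)%nat -> (forall d e, In d (Astar k) -> In e (Astar k) -> Rabs (sc d e) <= B) ->
  gw k x -> gw k y -> (c < k)%nat ->
  LS sc (x ++ [c]) y <= LS sc x y + 2 * B.
Proof.
  intros Hk HB Hx Hy Hc. apply LS_le. intros pi Hpi.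
  destruct (cut_x _ _ _ (length x) Hpi) as [b1 [Hb1 Hsep]]; [rewrite length_app; lia|].
  destruct (score_decomp sc (x ++ [c]) y pi (length x) b1 Hpi) as [pi1 [pi2 [V1 [V2 E]]]]; auto.
  { rewrite length_app; lia. }
  rewrite E by auto. rewrite firstn_len_app, skipn_len_app.
  rewrite length_app in V2. replace (length x + length [c] - length x)%nat with 1%nat in V2 by (simpl; lia).
  assert (H1 : align_score sc [c] (skipn b1 y) pi2 <= align_score sc [] (skipn b1 y) [] + 2 * B).
  { apply small_snoc with k; auto. apply gw_skipn; auto. rewrite length_skipn; auto. }
  assert (H2 : align_score sc x (firstn b1 y) pi1 + align_score sc [] (skipn b1 y) [] <= LS sc x y).
  { assert (Hl : length (firstn b1 y) = b1) by (rewrite length_firstn; lia).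
    assert (Eq : align_score sc (x ++ []) (firstn b1 y ++ skipn b1 y) (pi1 ++ shift (length x) (length (firstn b1 y)) []) = align_score sc x (firstn b1 y) pi1 + align_score sc [] (skipn b1 y) []).
    { apply score_split; [rewrite Hl; destruct V1; auto| constructor]. }
    rewrite app_nil_r, firstn_skipn, shift_nil, app_nil_r in Eq. rewrite <- Eq.
    apply LS_ge. apply valid_widen with (length x) b1; auto; lia. }
  lra.
Qed.

Definition Hyps k (p : nat -> R) (sc : option nat -> option nat -> R) : Prop :=
  (1 <= k)%nat /\ (forall i, (i < k)%nat -> 0 <= p i) /\ sumR (map p (seq 0 k)) = 1 /\
  (forall c d, In c (Astar k) -> In d (Astar k) -> sc c d = sc d c).

Definition fe k p sc a b : R := Ew k p a (fun x => Ew k p b (fun y => LS sc x y)).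

Lemma Ew_split k p a a' H :
  Ew k p (a + a') H = Ew k p a (fun x1 => Ew k p a' (fun x2 => H (x1 ++ x2))).
Proof.
  rewrite <- (Ew_prod k p a a' (fun x y => H (x ++ y))). apply Ew_ext. intros. rewrite firstn_skipn; auto.
Qed.

Lemma fe_sym k p sc a b : Hyps k p sc -> fe k p sc a b = fe k p sc b a.
Proof.
  intros [Hk [Hp [Hs Hsym]]]. unfold fe. rewrite Ew_fubini. apply Ew_ext. intros y _ Hy.
  apply Ew_ext. intros x _ Hx. apply (LS_sym k); auto.
Qed.

Lemma Ew_pc_r k p N g c : sumR (map p (seq 0 k)) = 1 ->
  Ew k p N g + c = Ew k p N (fun w => g w + c).
Proof. intros Hs. rewrite Ew_plus, Ew_const; auto. Qed.

Lemma Ew_pc_l k p N g c : sumR (map p (seq 0 k)) = 1 ->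
  c + Ew k p N g = Ew k p N (fun w => c + g w).
Proof. intros Hs. rewrite Ew_plus, Ew_const; auto. Qed.

Lemma fe_super k p sc a b a' b' : Hyps k p sc ->
  fe k p sc a b + fe k p sc a' b' <= fe k p sc (a + a') (b + b').
Proof.
  intros [Hk [Hp [Hs Hsym]]]. unfold fe. rewrite Ew_split.
  rewrite Ew_pc_r by auto. apply Ew_le; auto. intros x1 _ Hx1.
  rewrite Ew_pc_l by auto. apply Ew_le; auto. intros x2 _ Hx2.
  rewrite Ew_split.
  rewrite Ew_pc_r by auto. apply Ew_le; auto. intros y1 _ Hy1.
  rewrite Ew_pc_l by auto. apply Ew_le; auto. intros y2 _ Hy2.
  apply LS_super.
Qed.

Lemma fe_snoc k p sc B a b : Hyps k p sc ->
  (forall d e, In d (Astar k) -> In e (Astar k) -> Rabs (sc d e) <= B) ->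
  fe k p sc (S a) b <= fe k p sc a b + 2 * B.
Proof.
  intros [Hk [Hp [Hs Hsym]]] HB. unfold fe. replace (S a) with (a + 1)%nat by lia.
  rewrite Ew_split.
  rewrite Ew_pc_r by auto. apply Ew_le; auto.
  intros x1 _ Hx1.
  rewrite <- (Ew_const k p 1 (Ew k p b (fun y => LS sc x1 y) + 2 * B) Hs).
  apply Ew_le; auto. intros x2 Hl Hx2.
  rewrite Ew_pc_r by auto. apply Ew_le; auto.
  intros y _ Hy. destruct x2 as [|c [|]]; try (simpl in Hl; lia). inversion Hx2; subst.
  apply (LS_snoc k); auto.
Qed.

Lemma fe_snoc' k p sc B a b : Hyps k p sc ->
  (forall d e, In d (Astar k) -> In e (Astar k) -> Rabs (sc d e) <= B) ->
  fe k p sc a (S b) <= fe k p sc a b + 2 * B.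
Proof.
  intros H HB. rewrite (fe_sym _ _ _ a), (fe_sym _ _ _ a b) by auto. apply fe_snoc; auto.
Qed.

Definition Mx k p sc s : R :=
  fold_right Rmax (fe k p sc 0 s) (map (fun a => fe k p sc a (s - a)) (seq 0 (S s))).

Lemma Mx_ge k p sc a b : fe k p sc a b <= Mx k p sc (a + b).
Proof.
  unfold Mx. apply fold_Rmax_ge. replace b with (a + b - a)%nat at 1 by lia.
  apply (in_map (fun a0 => fe k p sc a0 (a + b - a0))). apply in_seq. lia.
Qed.

Lemma Mx_le k p sc s c : (forall a, (a <= s)%nat -> fe k p sc a (s - a) <= c) -> Mx k p sc s <= c.
Proof.
  intros H. unfold Mx. apply fold_Rmax_le.
  - pose proof (H 0%nat ltac:(lia)). rewrite Nat.sub_0_r in H0. exact H0.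
  - intros v Hv. apply in_map_iff in Hv. destruct Hv as [a [<- Ha]]. apply in_seq in Ha. apply H; lia.
Qed.

Lemma Mx_super k p sc s t : Hyps k p sc -> Mx k p sc s + Mx k p sc t <= Mx k p sc (s + t).
Proof.
  intros H.
  assert (Mx k p sc s <= Mx k p sc (s + t) - Mx k p sc t); [|lra].
  apply Mx_le. intros a Ha.
  assert (Mx k p sc t <= Mx k p sc (s + t) - fe k p sc a (s - a)); [|lra].
  apply Mx_le. intros a' Ha'.
  pose proof (fe_super k p sc a (s - a) a' (t - a') H).
  pose proof (Mx_ge k p sc (a + a') (s - a + (t - a'))).
  replace (a + a' + (s - a + (t - a')))%nat with (s + t)%nat in H1 by lia. lra.
Qed.

Lemma Mx_half k p sc s : Hyps k p sc -> Mx k p sc s <= fe k p sc s s / 2.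
Proof.
  intros H. apply Mx_le. intros a Ha.
  pose proof (fe_super k p sc a (s - a) (s - a) a H).
  rewrite (fe_sym k p sc (s - a) a H) in H0.
  replace (a + (s - a))%nat with s in H0 by lia. replace (s - a + a)%nat with s in H0 by lia. lra.
Qed.

Lemma Mx_snoc k p sc B s : Hyps k p sc ->
  (forall d e, In d (Astar k) -> In e (Astar k) -> Rabs (sc d e) <= B) ->
  Mx k p sc (S s) <= Mx k p sc s + 2 * B.
Proof.
  intros H HB. apply Mx_le. intros a Ha. destruct a as [|a].
  - replace (S s - 0)%nat with (S s) by lia. pose proof (fe_snoc' k p sc B 0 s H HB).
    pose proof (Mx_ge k p sc 0 s). simpl in H1. lra.
  - replace (S s - S a)%nat with (s - a)%nat by lia. pose proof (fe_snoc k p sc B a (s - a) H HB).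
    pose proof (Mx_ge k p sc a (s - a)). replace (a + (s - a))%nat with s in H1 by lia. lra.
Qed.

Lemma Mx_one k p sc B : Hyps k p sc ->
  (forall d e, In d (Astar k) -> In e (Astar k) -> Rabs (sc d e) <= B) ->
  - B <= Mx k p sc 1.
Proof.
  intros [Hk [Hp [Hs Hsym]]] HB. eapply Rle_trans; [|apply (Mx_ge k p sc 1 0)].
  unfold fe. rewrite <- (Ew_const k p 1 (- B) Hs). apply Ew_le; auto. intros x Hl Hx.
  rewrite Ew_0. destruct x as [|c [|]]; try (simpl in Hl; lia). inversion Hx; subst.
  eapply Rle_trans; [|apply (LS_ge sc [c] [] [])]; [|apply valid_nil].
  replace (align_score sc [c] [] []) with (sc (Some c) None) by (unfold align_score, letter_at, sumR; simpl; ring).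
  specialize (HB (Some c) None (in_Astar_Some k c H1) (in_Astar_None k)). apply Rabs_le_between in HB. lra.
Qed.

Lemma BD_split k (H : list nat -> list nat -> R) D a :
  (forall x2, gw k x2 -> BDw k (fun x1 => H x1 x2) D) ->
  (forall x1, gw k x1 -> BDw k (fun x2 => H x1 x2) D) ->
  BDw k (fun w => H (firstn a w) (skipn a w)) D.
Proof.
  intros H1 H2 u v c c' Hu Hv Hc Hc'. rewrite !firstn_app, !skipn_app.
  destruct (le_lt_dec a (length u)) as [Hle|Hlt].
  - replace (a - length u)%nat with 0%nat by lia. simpl. rewrite !app_nil_r.
    apply (H2 (firstn a u)); auto; try apply gw_firstn; try apply gw_skipn; auto.
  - rewrite !firstn_all2 by lia. rewrite !skipn_all2 by lia. simpl.
    replace (a - length u)%nat with (S (a - length u - 1)) by lia. simpl.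
    apply (H1 (skipn (a - length u - 1) v)); auto; try apply gw_firstn; try apply gw_skipn; auto.
Qed.

Lemma LS_BDx_abs k sc u v y c c' :
  (1 <= k)%nat -> (forall c d, In c (Astar k) -> In d (Astar k) -> sc c d = sc d c) ->
  gw k u -> gw k v -> gw k y -> (c < k)%nat -> (c' < k)%nat ->
  Rabs (LS sc (u ++ c :: v) y - LS sc (u ++ c' :: v) y) <= Sdelta k sc.
Proof.
  intros. apply Rabs_le.
  pose proof (LS_BDx k sc u v y c c'). pose proof (LS_BDx k sc u v y c' c). split.
  - assert (LS sc (u ++ c' :: v) y <= LS sc (u ++ c :: v) y + Sdelta k sc) by auto. lra.
  - assert (LS sc (u ++ c :: v) y <= LS sc (u ++ c' :: v) y + Sdelta k sc) by auto. lra.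
Qed.

Lemma LS_BDy_abs k sc u v x c c' :
  (1 <= k)%nat -> (forall c d, In c (Astar k) -> In d (Astar k) -> sc c d = sc d c) ->
  gw k u -> gw k v -> gw k x -> (c < k)%nat -> (c' < k)%nat ->
  Rabs (LS sc x (u ++ c :: v) - LS sc x (u ++ c' :: v)) <= Sdelta k sc.
Proof.
  intros. rewrite (LS_sym k sc x (u ++ c :: v)), (LS_sym k sc x (u ++ c' :: v)); auto.
  - apply LS_BDx_abs; auto.
  - apply gw_app; auto. constructor; auto.
  - apply gw_app; auto. constructor; auto.
Qed.

Definition Zf sc a1 b1 (x y : list nat) : R :=
  LS sc (firstn a1 x) (firstn b1 y) + LS sc (skipn a1 x) (skipn b1 y).

Lemma Zf_BD k sc a a1 b1 :
  (1 <= k)%nat -> (forall c d, In c (Astar k) -> In d (Astar k) -> sc c d = sc d c) ->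
  BDw k (fun w => Zf sc a1 b1 (firstn a w) (skipn a w)) (Sdelta k sc).
Proof.
  intros Hk Hs. apply (BD_split k (Zf sc a1 b1)).
  - intros y Hy. unfold Zf.
    apply (BD_split k (fun x1 x2 => LS sc x1 (firstn b1 y) + LS sc x2 (skipn b1 y))).
    + intros x2 Hx2 u v c c' Hu Hv Hc Hc'.
      replace (LS sc (u ++ c :: v) (firstn b1 y) + LS sc x2 (skipn b1 y) -
               (LS sc (u ++ c' :: v) (firstn b1 y) + LS sc x2 (skipn b1 y))) with
        (LS sc (u ++ c :: v) (firstn b1 y) - LS sc (u ++ c' :: v) (firstn b1 y)) by ring.
      apply LS_BDx_abs; auto. apply gw_firstn; auto.
    + intros x1 Hx1 u v c c' Hu Hv Hc Hc'.
      replace (LS sc x1 (firstn b1 y) + LS sc (u ++ c :: v) (skipn b1 y) -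
               (LS sc x1 (firstn b1 y) + LS sc (u ++ c' :: v) (skipn b1 y))) with
        (LS sc (u ++ c :: v) (skipn b1 y) - LS sc (u ++ c' :: v) (skipn b1 y)) by ring.
      apply LS_BDx_abs; auto. apply gw_skipn; auto.
  - intros x Hx. unfold Zf.
    apply (BD_split k (fun y1 y2 => LS sc (firstn a1 x) y1 + LS sc (skipn a1 x) y2)).
    + intros y2 Hy2 u v c c' Hu Hv Hc Hc'.
      replace (LS sc (firstn a1 x) (u ++ c :: v) + LS sc (skipn a1 x) y2 -
               (LS sc (firstn a1 x) (u ++ c' :: v) + LS sc (skipn a1 x) y2)) with
        (LS sc (firstn a1 x) (u ++ c :: v) - LS sc (firstn a1 x) (u ++ c' :: v)) by ring.
      apply LS_BDy_abs; auto. apply gw_firstn; auto.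
    + intros y1 Hy1 u v c c' Hu Hv Hc Hc'.
      replace (LS sc (firstn a1 x) y1 + LS sc (skipn a1 x) (u ++ c :: v) -
               (LS sc (firstn a1 x) y1 + LS sc (skipn a1 x) (u ++ c' :: v))) with
        (LS sc (skipn a1 x) (u ++ c :: v) - LS sc (skipn a1 x) (u ++ c' :: v)) by ring.
      apply LS_BDy_abs; auto. apply gw_skipn; auto.
Qed.

Lemma Ew_firstn' k p n N h : sumR (map p (seq 0 k)) = 1 -> (n <= N)%nat ->
  Ew k p N (fun w => h (firstn n w)) = Ew k p n h.
Proof. intros Hs H. replace N with (n + (N - n))%nat by lia. apply Ew_firstn; auto. Qed.

Lemma Ew_skipn' k p n N h : sumR (map p (seq 0 k)) = 1 -> (n <= N)%nat ->
  Ew k p N (fun w => h (skipn n w)) = Ew k p (N - n) h.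
Proof. intros Hs H. replace N with (n + (N - n))%nat at 1 by lia. apply Ew_skipn; auto. Qed.

Lemma Zf_mean k p sc a b a1 b1 : Hyps k p sc -> (a1 <= a)%nat -> (b1 <= b)%nat ->
  Ew k p (a + b) (fun w => Zf sc a1 b1 (firstn a w) (skipn a w)) =
  fe k p sc a1 b1 + fe k p sc (a - a1) (b - b1).
Proof.
  intros [Hk [Hp [Hs Hsym]]] Ha Hb.
  rewrite (Ew_prod k p a b (Zf sc a1 b1)). unfold Zf.
  rewrite (Ew_ext k p a _ (fun x => Ew k p b (fun y => LS sc (firstn a1 x) (firstn b1 y)) +
                                    Ew k p b (fun y => LS sc (skipn a1 x) (skipn b1 y)))).
  2:{ intros; apply Ew_plus. }
  rewrite Ew_plus. unfold fe. f_equal.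
  - rewrite (Ew_ext k p a _ (fun x => Ew k p b1 (fun y => LS sc (firstn a1 x) y))).
    2:{ intros. apply (Ew_firstn' k p b1 b (fun y => LS sc (firstn a1 w) y)); auto. }
    apply (Ew_firstn' k p a1 a (fun x => Ew k p b1 (fun y => LS sc x y))); auto.
  - rewrite (Ew_ext k p a _ (fun x => Ew k p (b - b1) (fun y => LS sc (skipn a1 x) y))).
    2:{ intros. apply (Ew_skipn' k p b1 b (fun y => LS sc (skipn a1 w) y)); auto. }
    apply (Ew_skipn' k p a1 a (fun x => Ew k p (b - b1) (fun y => LS sc x y))); auto.
Qed.

Lemma Zpoint Z EZ m W t s :
  EZ <= m -> Z <= EZ + W -> 0 <= t -> 0 <= s -> 0 <= W ->
  Z <= m + t + W * exp (s * (Z - EZ - t)).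
Proof.
  intros H1 H2 Ht Hs HW. destruct (Rle_dec (Z - EZ - t) 0).
  - pose proof (exp_pos (s * (Z - EZ - t))). nra.
  - assert (1 <= exp (s * (Z - EZ - t))).
    { pose proof (exp_ineq1_le (s * (Z - EZ - t))). nra. }
    nra.
Qed.

Lemma sumR_ge_term {A} (h : A -> R) l j :
  In j l -> (forall i, In i l -> 0 <= h i) -> h j <= sumR (map h l).
Proof.
  induction l; intros Hj H; [destruct Hj|]. cbn [map]. rewrite sumR_cons. destruct Hj as [<-|Hj].
  - assert (0 <= sumR (map h l)) by (apply sumR_map_nonneg; intros; apply H; simpl; auto). lra.
  - assert (0 <= h a) by (apply H; simpl; auto). assert (h j <= sumR (map h l)) by (apply IHl; auto; intros; apply H; simpl; auto). lra.
Qed.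

Lemma sumR_const {A} (c : R) (l : list A) : sumR (map (fun _ => c) l) = INR (length l) * c.
Proof.
  induction l; cbn [map length]; rewrite ?sumR_cons, ?sumR_nil; [simpl; lra|]. rewrite IHl, S_INR. lra.
Qed.

Definition cuts (a b kk : nat) : list (nat * nat) :=
  filter (fun q => orb (Nat.eqb (fst q + snd q) kk) (Nat.eqb (fst q + snd q) (S kk)))
    (list_prod (seq 0 (S a)) (seq 0 (S b))).

Lemma cuts_in a b kk a1 b1 : (a1 <= a)%nat -> (b1 <= b)%nat -> (a1 + b1 = kk \/ a1 + b1 = S kk)%nat ->
  In (a1, b1) (cuts a b kk).
Proof.
  intros. unfold cuts. apply filter_In. split.
  - apply in_prod; apply in_seq; lia.
  - simpl. apply orb_true_iff. destruct H1; [left|right]; apply Nat.eqb_eq; lia.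
Qed.

Lemma cuts_inv a b kk q : In q (cuts a b kk) ->
  (fst q <= a /\ snd q <= b /\ (fst q + snd q = kk \/ fst q + snd q = S kk))%nat.
Proof.
  unfold cuts. intros H. apply filter_In in H. destruct H as [H1 H2]. destruct q as [u v].
  apply in_prod_iff in H1. destruct H1 as [H1 H1']. apply in_seq in H1, H1'. simpl in *.
  apply orb_true_iff in H2. destruct H2 as [H2|H2]; apply Nat.eqb_eq in H2; lia.
Qed.

Lemma cuts_length a b kk : (length (cuts a b kk) <= S a * S b)%nat.
Proof.
  unfold cuts. eapply Nat.le_trans; [apply filter_length_le|]. rewrite length_prod, !length_seq. lia.
Qed.

Lemma Ew_affine_sum k p N {A} c0 c1 (h : A -> list nat -> R) l :
  sumR (map p (seq 0 k)) = 1 ->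
  Ew k p N (fun w => c0 + c1 * sumR (map (fun j => h j w) l)) = c0 + c1 * sumR (map (fun j => Ew k p N (h j)) l).
Proof. intros Hs. rewrite Ew_plus, Ew_const, Ew_scal, Ew_sum; auto. Qed.

Lemma doubling k p sc B kk s t :
  Hyps k p sc ->
  (forall d e, In d (Astar k) -> In e (Astar k) -> Rabs (sc d e) <= B) ->
  0 <= Sdelta k sc -> (1 <= kk)%nat -> 0 <= s -> s * Sdelta k sc <= 0.2 -> 0 <= t ->
  Mx k p sc (2 * kk) <= 2 * Mx k p sc kk + 3 * B + t +
     INR (2 * kk) * Sdelta k sc * (INR (S (2 * kk)) * INR (S (2 * kk))) *
     (exp (- (s * t)) * exp (0.9 * INR (2 * kk) * (s * s * (Sdelta k sc * Sdelta k sc)))).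
Proof.
  intros HH HB HD Hkk Hs0 HsD Ht. pose proof HH as [Hk [Hp [Hs Hsym]]].
  set (D := Sdelta k sc) in *.
  assert (HB0 : 0 <= B) by (specialize (HB None None (in_Astar_None k) (in_Astar_None k)); pose proof (Rabs_pos (sc None None)); lra).
  set (m := 2 * Mx k p sc kk + 3 * B).
  set (N := (2 * kk)%nat).
  set (Q := exp (- (s * t)) * exp (0.9 * INR N * (s * s * (D * D)))).
  apply Mx_le. intros a Ha. set (b := (N - a)%nat).
  assert (HN : (a + b)%nat = N) by (unfold b; lia).
  set (EZ := fun j : nat * nat => fe k p sc (fst j) (snd j) + fe k p sc (a - fst j) (b - snd j)).
  set (g := fun j : nat * nat => fun w => Zf sc (fst j) (snd j) (firstn a w) (skipn a w)).
  assert (HEZ : forall j, In j (cuts a b kk) -> EZ j <= m).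
  { intros [a1 b1] Hj. apply cuts_inv in Hj. simpl in Hj. unfold EZ, m; simpl.
    pose proof (Mx_ge k p sc a1 b1). pose proof (Mx_ge k p sc (a - a1) (b - b1)).
    destruct Hj as [Ha1 [Hb1 [Hab|Hab]]].
    - rewrite Hab in H. replace (a - a1 + (b - b1))%nat with kk in H0 by lia. lra.
    - rewrite Hab in H. replace (a - a1 + (b - b1))%nat with (kk - 1)%nat in H0 by lia.
      pose proof (Mx_snoc k p sc B kk HH HB). pose proof (Mx_super k p sc (kk - 1) 1 HH).
      replace (kk - 1 + 1)%nat with kk in H2 by lia. pose proof (Mx_one k p sc B HH HB). lra. }
  assert (Hmean : forall j, In j (cuts a b kk) -> Ew k p N (g j) = EZ j).
  { intros j Hj. apply cuts_inv in Hj. unfold g, EZ. rewrite <- HN. apply Zf_mean; auto; lia. }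
  assert (HBDg : forall j, BDw k (g j) D).
  { intros j. apply Zf_BD; auto. }
  assert (Hpt : forall x y, length x = a -> length y = b -> gw k x -> gw k y ->
      LS sc x y <= m + t + INR N * D * sumR (map (fun j => exp (s * (Zf sc (fst j) (snd j) x y - EZ j - t))) (cuts a b kk))).
  { intros x y Hx Hy Gx Gy. apply (LS_cutT sc x y kk); [lia|].
    intros a1 b1 Ha1 Hb1 Hab.
    assert (Hin : In (a1, b1) (cuts a b kk)) by (apply cuts_in; lia).
    eapply Rle_trans.
    - apply (Zpoint _ (EZ (a1, b1)) m (INR N * D) t s); auto.
      + pose proof (Ew_osc k p N (g (a1, b1)) D Hp Hs (HBDg _) (x ++ y)) as Ho.
        rewrite Hmean in Ho by auto. unfold g in Ho; simpl in Ho.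
        rewrite <- Hx in Ho. rewrite firstn_len_app, skipn_len_app in Ho.
        apply Ho; [rewrite length_app; lia| apply gw_app; auto].
      + apply Rmult_le_pos; [apply pos_INR|auto].
    - apply Rplus_le_compat_l. apply Rmult_le_compat_l; [apply Rmult_le_pos; [apply pos_INR|auto]|].
      apply (sumR_ge_term (fun j => exp (s * (Zf sc (fst j) (snd j) x y - EZ j - t))) _ (a1, b1)); auto.
      intros; left; apply exp_pos. }
  assert (Hexp : forall j, In j (cuts a b kk) ->
      Ew k p a (fun x => Ew k p b (fun y => exp (s * (Zf sc (fst j) (snd j) x y - EZ j - t)))) <= Q).
  { intros j Hj.
    rewrite <- (Ew_prod k p a b (fun x y => exp (s * (Zf sc (fst j) (snd j) x y - EZ j - t)))).
    rewrite HN.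
    rewrite (Ew_ext k p N _ (fun w => exp (- (s * t)) * exp (s * (Ew k p N (fun w => - g j w) - (- g j w))))).
    2:{ intros w _ _. rewrite <- exp_plus. f_equal. rewrite Ew_opp, Hmean by auto. unfold g. ring. }
    rewrite Ew_scal. unfold Q. apply Rmult_le_compat_l; [left; apply exp_pos|].
    apply (Ew_conc k p N (fun w => - g j w) D s); auto. apply BD_opp; auto. }
  unfold fe. eapply Rle_trans.
  { apply Ew_le; auto. intros x Hx Gx. apply Ew_le; auto. intros y Hy Gy. apply Hpt; auto. }
  rewrite (Ew_ext k p a _ (fun x => m + t + INR N * D * sumR (map (fun j => Ew k p b (fun y => exp (s * (Zf sc (fst j) (snd j) x y - EZ j - t)))) (cuts a b kk)))).
  2:{ intros x _ _. apply (Ew_affine_sum k p b (m + t) (INR N * D) (fun j y => exp (s * (Zf sc (fst j) (snd j) x y - EZ j - t)))); auto. }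
  rewrite (Ew_affine_sum k p a (m + t) (INR N * D) (fun j x => Ew k p b (fun y => exp (s * (Zf sc (fst j) (snd j) x y - EZ j - t))))); auto.
  replace (m + t + INR N * D * (INR (S N) * INR (S N)) * Q) with
     (m + t + INR N * D * (INR (S N) * INR (S N) * Q)) by ring.
  apply Rplus_le_compat_l. apply Rmult_le_compat_l; [apply Rmult_le_pos; [apply pos_INR|auto]|].
  eapply Rle_trans; [apply (sumR_map_le _ (fun _ => Q)); intros j Hj; apply Hexp; auto|].
  rewrite sumR_const. apply Rmult_le_compat_r; [unfold Q; left; apply Rmult_lt_0_compat; apply exp_pos|].
  rewrite <- mult_INR. apply le_INR. eapply Nat.le_trans; [apply cuts_length|]. apply Nat.mul_le_mono; lia.
Qed.

Lemma ln_lt_id y : 0 < y -> ln y < y.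
Proof.
  intros H. pose proof (exp_ineq1_le y). rewrite <- (ln_exp y) at 2.
  apply ln_increasing; auto. lra.
Qed.

Lemma ln_le_mono x y : 0 < x -> x <= y -> ln x <= ln y.
Proof.
  intros H1 H2. destruct H2 as [H2|<-]; [left; apply ln_increasing; auto| lra].
Qed.

Lemma nat_large x : exists K : nat, x <= INR K.
Proof.
  destruct (archimed x) as [H1 _]. destruct (Z_le_gt_dec 0 (up x)) as [Hz|Hz].
  - exists (Z.to_nat (up x)). rewrite INR_IZR_INZ, Z2Nat.id by auto. lra.
  - exists 0%nat. assert (Hz2 : (up x < 0)%Z) by lia. apply IZR_lt in Hz2. simpl. lra.
Qed.

Lemma ln_le_4 n : 1 <= n -> ln n <= 4 * sqrt (sqrt n).
Proof.
  intros Hn. set (y := sqrt (sqrt n)).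
  assert (Hy : 0 < y) by (unfold y; apply sqrt_lt_R0, sqrt_lt_R0; lra).
  assert (Hn' : n = y * y * (y * y)).
  { unfold y. rewrite sqrt_sqrt by (apply sqrt_pos). rewrite sqrt_sqrt; lra. }
  rewrite Hn'. rewrite !ln_mult by (try apply Rmult_lt_0_compat; auto).
  pose proof (ln_lt_id y Hy). lra.
Qed.

Lemma ev_ln_big A : exists K : nat, forall n, (K <= n)%nat -> A <= ln (INR n).
Proof.
  destruct (nat_large (exp A)) as [K HK]. exists K. intros n Hn.
  rewrite <- (ln_exp A). apply ln_le_mono; [apply exp_pos|].
  eapply Rle_trans; [exact HK|]. apply le_INR; auto.
Qed.

Lemma ev_ln_small A : 0 < A -> exists K : nat, forall n, (K <= n)%nat -> ln (INR n) <= A * sqrt (INR n).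
Proof.
  intros HA. set (z := 4 / A). destruct (nat_large (z * z * (z * z) + 1)) as [K HK].
  exists K. intros n Hn. assert (HnK : INR K <= INR n) by (apply le_INR; auto).
  assert (Hz : 0 < z) by (unfold z; apply Rdiv_lt_0_compat; lra).
  assert (Hn1 : 1 <= INR n) by nra.
  set (y := sqrt (sqrt (INR n))).
  assert (Hy : 0 < y) by (unfold y; apply sqrt_lt_R0, sqrt_lt_R0; lra).
  assert (Hn' : INR n = y * y * (y * y)).
  { unfold y. rewrite sqrt_sqrt by (apply sqrt_pos). rewrite sqrt_sqrt; lra. }
  assert (Hs : sqrt (INR n) = y * y) by (unfold y; rewrite sqrt_sqrt; [reflexivity| apply sqrt_pos]).
  assert (Hyz : z <= y).
  { destruct (Rle_dec z y) as [|Hc]; auto. exfalso. assert (y < z) by lra.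
    assert (y * y < z * z) by nra. assert (y * y * (y * y) < z * z * (z * z)) by nra. lra. }
  pose proof (ln_le_4 (INR n) Hn1). fold y in H. rewrite Hs.
  assert (4 = A * z) by (unfold z; field; lra). nra.
Qed.

Definition eta : R := 1 / 40.
Definition rho : R := 1 / 280.
Definition phi (n : nat) : R := eta * ln (INR n) / sqrt (INR n).

Definition Lstar (B D : R) : R :=
  Rmax 1 (Rmax ((3 + Rabs (ln (18 * D))) / (rho * rho / (7.2 * (D * D)))) ((280 * (3 * B + 1) + 10) / 3)).

Lemma exp_le_exp x y : x <= y -> exp x <= exp y.
Proof. intros [H|<-]; [left; apply exp_increasing; auto| lra]. Qed.

Lemma R_small D L c X :
  0 < D -> 0 < c -> 1 <= L -> (3 + Rabs (ln (18 * D))) / c <= L -> X <= 18 * D * exp (3 * L) ->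
  X * exp (- (c * L * L)) <= 1.
Proof.
  intros HD Hc HL HL0 HX.
  assert (H18 : 18 * D = exp (ln (18 * D))) by (rewrite exp_ln; lra).
  eapply Rle_trans; [apply Rmult_le_compat_r; [left; apply exp_pos| exact HX]|].
  rewrite H18, <- !exp_plus. rewrite <- exp_0. apply exp_le_exp.
  assert (3 + Rabs (ln (18 * D)) <= c * L).
  { apply (Rmult_le_reg_r (/ c)); [apply Rinv_0_lt_compat; lra|].
    replace (c * L * / c) with L by (field; lra). exact HL0. }
  pose proof (Rle_abs (ln (18 * D))). pose proof (Rabs_pos (ln (18 * D))). nra.
Qed.

Lemma div_nonpos X Y : X <= 0 -> 0 < Y -> X / Y <= 0.
Proof. intros. unfold Rdiv. pose proof (Rinv_0_lt_compat Y H0). nra. Qed.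

Lemma sqrt2_ge : 1.4 <= sqrt 2.
Proof.
  replace 1.4 with (sqrt (1.4 * 1.4)) by (apply sqrt_square; lra). apply sqrt_le_1_alt. lra.
Qed.

Lemma ln2_le1 : ln 2 <= 1.
Proof.
  rewrite <- (ln_exp 1). apply ln_le_mono; [lra|]. pose proof (exp_ineq1_le 1). lra.
Qed.

Lemma ln2_pos : 0 <= ln 2.
Proof. rewrite <- ln_1. apply ln_le_mono; lra. Qed.

Lemma decrease k p sc B kk :
  Hyps k p sc ->
  (forall d e, In d (Astar k) -> In e (Astar k) -> Rabs (sc d e) <= B) ->
  0 < Sdelta k sc -> (1 <= kk)%nat ->
  Lstar B (Sdelta k sc) <= ln (INR kk) -> ln (INR kk) <= 201.6 * Sdelta k sc * sqrt (INR kk) ->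
  Mx k p sc (2 * kk) / INR (2 * kk) + phi (2 * kk) <= Mx k p sc kk / INR kk + phi kk.
Proof.
  intros HH HB HD Hkk HLs HLr.
  assert (HB0 : 0 <= B) by (specialize (HB None None (in_Astar_None k) (in_Astar_None k)); pose proof (Rabs_pos (sc None None)); lra).
  set (D := Sdelta k sc) in *. set (L := ln (INR kk)) in *. set (r := sqrt (INR kk)) in *.
  assert (Hkk1 : 1 <= INR kk) by (replace 1 with (INR 1) by reflexivity; apply le_INR; auto).
  assert (Hr2 : r * r = INR kk) by (unfold r; apply sqrt_sqrt; lra).
  assert (Hr1 : 1 <= r) by (unfold r; rewrite <- sqrt_1; apply sqrt_le_1_alt; lra).
  assert (HL1 : 1 <= L) by (eapply Rle_trans; [apply Rmax_l|exact HLs]).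
  assert (HL0 : (3 + Rabs (ln (18 * D))) / (rho * rho / (7.2 * (D * D))) <= L)
    by (eapply Rle_trans; [|exact HLs]; unfold Lstar; eapply Rle_trans; [|apply Rmax_r]; apply Rmax_l).
  assert (HLB : (280 * (3 * B + 1) + 10) / 3 <= L)
    by (eapply Rle_trans; [|exact HLs]; unfold Lstar; eapply Rle_trans; [|apply Rmax_r]; apply Rmax_r).
  set (t := rho * r * L). set (s := t / (3.6 * INR kk * (D * D))).
  assert (Ht0 : 0 <= t) by (unfold t, rho; apply Rmult_le_pos; [apply Rmult_le_pos|]; lra).
  assert (Hs0 : 0 <= s) by (unfold s; apply Rmult_le_pos; auto; left; apply Rinv_0_lt_compat; nra).
  assert (HsD : s * D <= 0.2).
  { assert (s * D = rho * L / (3.6 * r * D)) by (unfold s, t; rewrite <- Hr2; replace 3.6 with (36/10) by lra; field; lra).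
    rewrite H. apply (Rmult_le_reg_r (3.6 * r * D)); [nra|].
    unfold Rdiv. rewrite Rmult_assoc, Rinv_l by nra. unfold rho. nra. }
  pose proof (doubling k p sc B kk s t HH HB (Rlt_le _ _ HD) Hkk Hs0 HsD Ht0) as Hdb. fold D in Hdb.
  set (c := rho * rho / (7.2 * (D * D))) in *.
  assert (Hc : 0 < c) by (unfold c, rho; apply Rdiv_lt_0_compat; nra).
  assert (Hex : exp (- (s * t)) * exp (0.9 * INR (2 * kk) * (s * s * (D * D))) = exp (- (c * L * L))).
  { rewrite <- exp_plus. f_equal. rewrite mult_INR. unfold s, c, t. rewrite <- Hr2. replace (INR 2) with 2 by (simpl; lra). replace 3.6 with (36/10) by lra. replace 0.9 with (9/10) by lra. replace 7.2 with (72/10) by lra. field. lra. }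
  rewrite Hex in Hdb.
  assert (Hpoly : INR (2 * kk) * D * (INR (S (2 * kk)) * INR (S (2 * kk))) <= 18 * D * exp (3 * L)).
  { replace (3 * L) with (L + L + L) by ring. rewrite !exp_plus. unfold L. rewrite exp_ln by lra.
    rewrite S_INR, mult_INR. replace (INR 2) with 2 by (simpl; lra).
    assert (0 <= (2 * INR kk + 1) * (2 * INR kk + 1) <= 9 * (INR kk * INR kk)) by (split; nra).
    assert (0 <= 2 * INR kk * D) by nra. nra. }
  pose proof (R_small D L c _ HD Hc HL1 HL0 Hpoly) as HR.
  assert (HM : Mx k p sc (2 * kk) <= 2 * Mx k p sc kk + 3 * B + t + 1) by lra.
  assert (Hphi2 : phi (2 * kk) <= eta * (1 + L) / (1.4 * r)).
  { unfold phi. rewrite mult_INR. replace (INR 2) with 2 by (simpl; lra).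
    rewrite ln_mult by lra. rewrite sqrt_mult by lra. fold L r.
    pose proof sqrt2_ge. pose proof ln2_le1. pose proof ln2_pos.
    unfold Rdiv. apply Rmult_le_compat.
    - unfold eta; nra.
    - left; apply Rinv_0_lt_compat; nra.
    - unfold eta; nra.
    - apply Rinv_le_contravar; nra. }
  assert (Hphi : phi kk = eta * L / r) by reflexivity.
  rewrite Hphi. rewrite mult_INR. replace (INR 2) with 2 by (simpl; lra). rewrite <- Hr2.
  assert (E1 : Mx k p sc (2 * kk) / (2 * (r * r)) <= Mx k p sc kk / (r * r) + (3 * B + t + 1) / (2 * (r * r))).
  { replace (Mx k p sc kk / (r * r) + (3 * B + t + 1) / (2 * (r * r))) with
      ((2 * Mx k p sc kk + 3 * B + t + 1) / (2 * (r * r))) by (field; lra).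
    apply Rmult_le_compat_r; [left; apply Rinv_0_lt_compat; nra| lra]. }
  assert (E2 : (3 * B + t + 1) / (2 * (r * r)) + eta * (1 + L) / (1.4 * r) - eta * L / r <= 0).
  { replace ((3 * B + t + 1) / (2 * (r * r)) + eta * (1 + L) / (1.4 * r) - eta * L / r) with
      ((3 * B + t + 1 + 2 * r * eta * (1 + L) / 1.4 - 2 * eta * L * r) / (2 * (r * r))) by (replace 1.4 with (14/10) by lra; field; lra).
    apply div_nonpos; [|nra]. unfold t, eta, rho.
    assert (3 * B + 1 <= (3 * B + 1) * r) by nra.
    assert ((3 * B + 1) + 1 / 28 <= 3 / 280 * L) by lra.
    nra. }
  lra.
Qed.

Lemma pow2_ge n : (n <= 2 ^ n)%nat.
Proof. induction n; simpl; [lia|]. assert (2 ^ n <> 0)%nat by (apply Nat.pow_nonzero; lia). lia. Qed.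

Lemma cv_upper (u : nat -> R) l c (g : nat -> nat) :
  Un_cv u l -> (forall j, u (g j) <= c) -> (forall N, exists j, (N <= g j)%nat) -> l <= c.
Proof.
  intros Hu Hg Hinf. destruct (Rle_dec l c) as [|Hc]; auto. exfalso.
  destruct (Hu (l - c)) as [N HN]; [lra|]. destruct (Hinf N) as [j Hj].
  specialize (HN _ Hj). specialize (Hg j). unfold Rdist in HN.
  apply Rabs_def2 in HN. lra.
Qed.

Lemma phi_nonneg n : (1 <= n)%nat -> 0 <= phi n.
Proof.
  intros H. unfold phi. assert (1 <= INR n) by (replace 1 with (INR 1) by reflexivity; apply le_INR; auto).
  assert (0 <= ln (INR n)) by (rewrite <- ln_1; apply ln_le_mono; lra).
  assert (0 < sqrt (INR n)) by (apply sqrt_lt_R0; lra). unfold eta.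
  unfold Rdiv. apply Rmult_le_pos; [nra|]. left; apply Rinv_0_lt_compat; auto.
Qed.

Lemma iter_dec k p sc K0 :
  (forall kk, (K0 <= kk)%nat -> Mx k p sc (2 * kk) / INR (2 * kk) + phi (2 * kk) <= Mx k p sc kk / INR kk + phi kk) ->
  forall m j, (K0 <= m)%nat ->
  Mx k p sc (2 ^ j * m) / INR (2 ^ j * m) + phi (2 ^ j * m) <= Mx k p sc m / INR m + phi m.
Proof.
  intros Hd m j Hm. induction j.
  - simpl. rewrite Nat.add_0_r. lra.
  - replace (2 ^ S j * m)%nat with (2 * (2 ^ j * m))%nat by (simpl; lia).
    eapply Rle_trans; [apply Hd|exact IHj].
    assert (2 ^ j <> 0)%nat by (apply Nat.pow_nonzero; lia). nia.
Qed.

Lemma lam_bound k p sc lam K0 m :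
  Hyps k p sc -> Un_cv (lambda_n k p sc) lam ->
  (forall kk, (K0 <= kk)%nat -> Mx k p sc (2 * kk) / INR (2 * kk) + phi (2 * kk) <= Mx k p sc kk / INR kk + phi kk) ->
  (K0 <= m)%nat -> (1 <= m)%nat ->
  lam <= fe k p sc m m / INR m + 2 * phi m.
Proof.
  intros HH Hcv Hd HK Hm1.
  apply (cv_upper _ _ _ (fun j => (2 ^ j * m)%nat) Hcv).
  - intros j. set (n := (2 ^ j * m)%nat).
    assert (Hn : (1 <= n)%nat) by (unfold n; assert (2 ^ j <> 0)%nat by (apply Nat.pow_nonzero; lia); nia).
    assert (HnR : 1 <= INR n) by (replace 1 with (INR 1) by reflexivity; apply le_INR; auto).
    assert (HmR : 1 <= INR m) by (replace 1 with (INR 1) by reflexivity; apply le_INR; auto).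
    unfold lambda_n. rewrite Expect_Ew. fold (fe k p sc n n).
    pose proof (Mx_ge k p sc n n) as H1.
    pose proof (iter_dec k p sc K0 Hd m (S j) HK) as H2.
    replace (2 ^ S j * m)%nat with (n + n)%nat in H2 by (unfold n; simpl; lia).
    pose proof (phi_nonneg (n + n) ltac:(lia)) as H3.
    pose proof (Mx_half k p sc m HH) as H4.
    rewrite plus_INR in H2.
    assert (fe k p sc n n / INR n <= 2 * (Mx k p sc (n + n) / (INR n + INR n))).
    { replace (2 * (Mx k p sc (n + n) / (INR n + INR n))) with (Mx k p sc (n + n) / INR n) by (field; lra).
      apply Rmult_le_compat_r; [left; apply Rinv_0_lt_compat; lra| exact H1]. }
    assert (Mx k p sc m / INR m <= fe k p sc m m / INR m / 2).
    { replace (fe k p sc m m / INR m / 2) with (fe k p sc m m / 2 / INR m) by (field; lra).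
      apply Rmult_le_compat_r; [left; apply Rinv_0_lt_compat; lra| exact H4]. }
    lra.
  - intros N. exists N. pose proof (pow2_ge N). nia.
Qed.

Lemma B_exists k (sc : option nat -> option nat -> R) :
  exists B, forall d e, In d (Astar k) -> In e (Astar k) -> Rabs (sc d e) <= B.
Proof.
  exists (fold_right Rmax 0 (map (fun q => Rabs (sc (fst q) (snd q))) (list_prod (Astar k) (Astar k)))).
  intros d e Hd He. apply fold_Rmax_ge.
  apply (in_map (fun q => Rabs (sc (fst q) (snd q))) _ (d, e)). apply in_prod; auto.
Qed.

Lemma conc_LS k p sc n s :
  Hyps k p sc -> 0 <= s -> s * Sdelta k sc <= 0.2 -> 0 <= Sdelta k sc ->
  Ew k p n (fun x => Ew k p n (fun y => exp (s * (fe k p sc n n - LS sc x y)))) <=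
  exp (0.9 * INR (n + n) * (s * s * (Sdelta k sc * Sdelta k sc))).
Proof.
  intros HH Hs0 HsD HD. pose proof HH as [Hk [Hp [Hs Hsym]]].
  set (g := fun w => LS sc (firstn n w) (skipn n w)).
  assert (Hm : Ew k p (n + n) g = fe k p sc n n) by (unfold g, fe; apply (Ew_prod k p n n (LS sc))).
  rewrite <- (Ew_prod k p n n (fun x y => exp (s * (fe k p sc n n - LS sc x y)))).
  rewrite <- Hm. apply (Ew_conc k p (n + n) g); auto.
  unfold g. apply (BD_split k (LS sc)).
  - intros y Hy u v c c' Hu Hv Hc Hc'. apply LS_BDx_abs; auto.
  - intros x Hx u v c c' Hu Hv Hc Hc'. apply LS_BDy_abs; auto.
Qed.

Theorem mainTheorem5 (k : nat) (p : nat -> R) (sc : option nat -> option nat -> R) :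
  (1 <= k)%nat ->
  (forall i, (i < k)%nat -> 0 <= p i) ->
  sumR (map p (seq 0 k)) = 1 ->
  (forall c d, In c (Astar k) -> In d (Astar k) -> sc c d = sc d c) ->
  Sdelta k sc > 0 ->
  forall lam : R, Un_cv (lambda_n k p sc) lam ->
  exists N : nat, forall n : nat, (N <= n)%nat ->
    Prob k p n (fun X Y => Rge_b (LS sc X Y / INR n) (lam - ln (INR n) / sqrt (INR n)))
      >= 1 - Rpower (INR n) (- ((1 / (8 * (Sdelta k sc) ^ 2)) * ln (INR n))).
Proof.
  intros Hk Hp Hs Hsym HD lam Hcv.
  assert (HH : Hyps k p sc) by (repeat split; auto).
  destruct (B_exists k sc) as [B HB].
  set (D := Sdelta k sc) in *.
  destruct (ev_ln_big (Lstar B D)) as [K1 HK1].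
  destruct (ev_ln_small (201.6 * D)) as [K2 HK2]; [lra|].
  destruct (ev_ln_small (0.75 * D)) as [K3 HK3]; [lra|].
  set (K0 := Nat.max 1 (Nat.max K1 K2)).
  assert (Hdec : forall kk, (K0 <= kk)%nat ->
     Mx k p sc (2 * kk) / INR (2 * kk) + phi (2 * kk) <= Mx k p sc kk / INR kk + phi kk).
  { intros kk Hkk. apply (decrease k p sc B kk HH HB HD); [unfold K0 in Hkk; lia| |].
    - apply HK1. unfold K0 in Hkk; lia.
    - apply HK2. unfold K0 in Hkk; lia. }
  exists (Nat.max K0 K3). intros n Hn.
  assert (Hn1 : (1 <= n)%nat) by (unfold K0 in Hn; lia).
  pose proof (lam_bound k p sc lam K0 n HH Hcv Hdec ltac:(lia) Hn1) as Hlam.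
  assert (HnR : 1 <= INR n) by (replace 1 with (INR 1) by reflexivity; apply le_INR; auto).
  set (L := ln (INR n)) in *. set (r := sqrt (INR n)) in *.
  assert (Hr2 : r * r = INR n) by (unfold r; apply sqrt_sqrt; lra).
  assert (Hr1 : 1 <= r) by (unfold r; rewrite <- sqrt_1; apply sqrt_le_1_alt; lra).
  assert (HL0 : 0 <= L) by (unfold L; rewrite <- ln_1; apply ln_le_mono; lra).
  assert (HLr : L <= 0.75 * D * r) by (apply HK3; lia).
  assert (Hphi : phi n = eta * L / r) by reflexivity.
  set (f0 := fe k p sc n n) in *.
  set (t0 := 0.95 * r * L).
  set (s0 := t0 / (3.6 * INR n * (D * D))).
  assert (Ht0 : 0 <= t0) by (unfold t0; nra).
  assert (Hs0 : 0 <= s0) by (unfold s0; apply Rmult_le_pos; auto; left; apply Rinv_0_lt_compat; nra).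
  assert (HsD : s0 * D <= 0.2).
  { assert (s0 * D = 0.95 * L / (3.6 * r * D)) by (unfold s0, t0; rewrite <- Hr2; replace 3.6 with (36/10) by lra; replace 0.95 with (95/100) by lra; field; lra).
    rewrite H. apply (Rmult_le_reg_r (3.6 * r * D)); [nra|].
    unfold Rdiv. rewrite Rmult_assoc, Rinv_l by nra. nra. }
  assert (Hpt : forall x y, 1 - exp (- (s0 * t0)) * exp (s0 * (f0 - LS sc x y)) <=
      (if Rge_b (LS sc x y / INR n) (lam - L / r) then 1 else 0)).
  { intros x y. rewrite <- exp_plus.
    unfold Rge_b. destruct (Rle_dec (lam - L / r) (LS sc x y / INR n)) as [Hle|Hlt].
    - pose proof (exp_pos (- (s0 * t0) + s0 * (f0 - LS sc x y))). lra.
    - assert (HLS : LS sc x y < f0 - t0).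
      { apply Rnot_le_lt in Hlt.
        assert (LS sc x y < INR n * lam - r * L).
        { apply (Rmult_lt_compat_r (INR n)) in Hlt; [|lra].
          replace (LS sc x y / INR n * INR n) with (LS sc x y) in Hlt by (field; lra).
          replace ((lam - L / r) * INR n) with (INR n * lam - r * L) in Hlt by (rewrite <- Hr2; field; lra). lra. }
        assert (INR n * lam <= f0 + r * L / 20).
        { rewrite Hphi in Hlam. apply (Rmult_le_compat_l (INR n)) in Hlam; [|lra].
          replace (INR n * (f0 / INR n + 2 * (eta * L / r))) with (f0 + r * L / 20) in Hlam
            by (unfold eta; rewrite <- Hr2; field; lra). lra. }
        unfold t0. nra. }
      assert (1 <= exp (- (s0 * t0) + s0 * (f0 - LS sc x y))).
      { rewrite <- exp_0. apply exp_le_exp. nra. }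
      lra. }
  unfold Prob. rewrite Expect_Ew. apply Rle_ge.
  eapply Rle_trans; [|apply Ew_le; auto; intros x _ _; apply Ew_le; auto; intros y _ _; apply Hpt].
  rewrite (Ew_ext k p n _ (fun x => 1 + (- exp (- (s0 * t0))) * Ew k p n (fun y => exp (s0 * (f0 - LS sc x y))))).
  2:{ intros x _ _. rewrite <- Ew_scal, Ew_pc_l by auto. apply Ew_ext. intros; ring. }
  rewrite (Ew_plus k p n (fun _ => 1) (fun x => - exp (- (s0 * t0)) * Ew k p n (fun y => exp (s0 * (f0 - LS sc x y))))).
  rewrite Ew_const by auto.
  rewrite (Ew_scal k p n (- exp (- (s0 * t0))) (fun x => Ew k p n (fun y => exp (s0 * (f0 - LS sc x y))))).
  assert (Hc := conc_LS k p sc n s0 HH Hs0 HsD (Rlt_le _ _ HD)). fold D f0 in Hc.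
  assert (Hexp : exp (- (s0 * t0)) * exp (0.9 * INR (n + n) * (s0 * s0 * (D * D))) <=
                 Rpower (INR n) (- (1 / (8 * D ^ 2) * L))).
  { unfold Rpower. fold L. rewrite <- exp_plus. apply exp_le_exp.
    rewrite plus_INR. unfold s0, t0. rewrite <- Hr2.
    replace (- (0.95 * r * L / (3.6 * (r * r) * (D * D)) * (0.95 * r * L)) +
      0.9 * (r * r + r * r) * (0.95 * r * L / (3.6 * (r * r) * (D * D)) * (0.95 * r * L / (3.6 * (r * r) * (D * D))) * (D * D)))
      with (- (9025 / 72000) * (L * L) / (D * D))
      by (replace 3.6 with (36/10) by lra; replace 0.95 with (95/100) by lra; replace 0.9 with (9/10) by lra; field; lra).
    replace (- (1 / (8 * D ^ 2) * L) * L) with (- (1 / 8) * (L * L) / (D * D)) by (field; lra).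
    unfold Rdiv. apply Rmult_le_compat_r; [left; apply Rinv_0_lt_compat; nra|]. nra. }
  assert (0 <= exp (- (s0 * t0))) by (left; apply exp_pos).
  nra.
Qed.
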